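(* The multiplicity of $\vartheta[m]$ along $q_\nu=0$ ($\nu=0,2,1$ respectively) in the coordinates $$q_0=e^{2\pi i (z_0+z_1)/8},\quad q_2=e^{2\pi i (z_2+z_1)/8},\quad q_1=e^{-2\pi i z_1/8}$$ is $$a_1,\quad a_2,\quad a_1+a_2-2a_1a_2,\qquad m={a\choose b},\ a={a_1\choose a_2}.$$
   Context: Genus two, $Z=\begin{pmatrix}z_0&z_1\\ z_1&z_2\end{pmatrix}\in\mathbb{H}_2$. For a theta characteristic $m={a\choose b}$, $a,b\in\{0,1\}^2$, the theta constant is $\vartheta[m](Z)=\sum_{g\in\mathbb{Z}^2}e^{\pi i(Z[g+a/2]+{}^tb(g+a/2))}$. These are periodic under $Z\mapsto Z+8S$, $S$ integral symmetric, so they can be written as Laurent series in the normal coordinates $q_0,q_1,q_2$ above; these are in fact power series, hence extend holomorphically to the completed Reinhardt domain $\tilde D=D\cup\{q\in\mathbb{C}^3;\ q_0q_1q_2=0\}$, where $D$ is the image of $\mathbb{H}_2$ under $Z\mapsto(q_0,q_1,q_2)$. The multiplicity refers to the vanishing order of this power series along the divisor $q_\nu=0$ (with $a_1,a_2\in\{0,1\}\subset\mathbb{Z}$). *)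

(* Defs.v *)
From Stdlib Require Import Reals ZArith.
From Coquelicot Require Import Coquelicot.
Open Scope R_scope.

Definition cexp (z : C) : C :=
  (exp (Re z) * cos (Im z), exp (Re z) * sin (Im z)).

(* A point Z = [[z0, z1], [z1, z2]] of the Siegel upper half space H_2:
   symmetric with positive definite imaginary part. *)
Definition in_H2 (z0 z1 z2 : C) : Prop :=
  0 < Im z0 /\ 0 < Im z0 * Im z2 - Im z1 * Im z1.

(* Summand of the theta series for characteristic m = (a ; b), a = (a1,a2),
   b = (b1,b2), at g = (g1,g2) in Z^2:
   exp(pi i (Z[g + a/2] + b^t (g + a/2))). *)
Definition theta_term (a1 a2 b1 b2 : nat) (z0 z1 z2 : C) (g1 g2 : Z) : C :=
  let x1 : R := IZR g1 + INR a1 / 2 in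
  let x2 : R := IZR g2 + INR a2 / 2 in
  let ZX : C := Cplus (Cplus (Cmult z0 (RtoC (x1 * x1)))
                             (Cmult z1 (RtoC (2 * x1 * x2))))
                      (Cmult z2 (RtoC (x2 * x2))) in
  let bx : R := INR b1 * x1 + INR b2 * x2 in
  cexp (Cmult (Cmult (RtoC PI) Ci) (Cplus ZX (RtoC bx))).

Definition theta_partial (a1 a2 b1 b2 : nat) (z0 z1 z2 : C) (N : nat) : C :=
  sum_n (fun i : nat => sum_n (fun j : nat =>
     theta_term a1 a2 b1 b2 z0 z1 z2
       (Z.of_nat i - Z.of_nat N)%Z (Z.of_nat j - Z.of_nat N)%Z) (2 * N)) (2 * N).

(* theta[m](Z) = v  (the series is absolutely convergent, so the limit of
   the square partial sums is its value). *)
Definition theta_is (a1 a2 b1 b2 : nat) (z0 z1 z2 : C) (v : C) : Prop :=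
  filterlim (theta_partial a1 a2 b1 b2 z0 z1 z2) eventually (locally v).

Definition q0 (z0 z1 z2 : C) : C :=
  cexp (Cmult (Cmult (RtoC (2 * PI / 8)) Ci) (Cplus z0 z1)).
Definition q2 (z0 z1 z2 : C) : C :=
  cexp (Cmult (Cmult (RtoC (2 * PI / 8)) Ci) (Cplus z2 z1)).
Definition q1 (z0 z1 z2 : C) : C :=
  cexp (Cmult (Cmult (RtoC (- (2 * PI / 8))) Ci) z1).

Definition pterm (c : nat -> nat -> nat -> C) (w0 w1 w2 : C) (n0 n1 n2 : nat) : C :=
  Cmult (Cmult (Cmult (c n0 n1 n2) (pow_n w0 n0)) (pow_n w1 n1)) (pow_n w2 n2).

Definition box_sum (c : nat -> nat -> nat -> C) (w0 w1 w2 : C) (N : nat) : C :=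
  sum_n (fun i => sum_n (fun j => sum_n (fun k => pterm c w0 w1 w2 i j k) N) N) N.

Definition box_abs_sum (c : nat -> nat -> nat -> C) (w0 w1 w2 : C) (N : nat) : R :=
  sum_n (fun i => sum_n (fun j => sum_n (fun k => Cmod (pterm c w0 w1 w2 i j k)) N) N) N.

Definition pseries_sum (c : nat -> nat -> nat -> C) (w0 w1 w2 : C) (v : C) : Prop :=
  (exists M : R, forall N, box_abs_sum c w0 w1 w2 N <= M) /\
  filterlim (box_sum c w0 w1 w2) eventually (locally v).

Definition theta_expansion (a1 a2 b1 b2 : nat) (c : nat -> nat -> nat -> C) : Prop :=
  forall z0 z1 z2 : C, in_H2 z0 z1 z2 ->
    exists v : C, theta_is a1 a2 b1 b2 z0 z1 z2 v /\
      pseries_sum c (q0 z0 z1 z2) (q1 z0 z1 z2) (q2 z0 z1 z2) v.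

Definition mult_q0 (c : nat -> nat -> nat -> C) (k : nat) : Prop :=
  (exists n1 n2, c k n1 n2 <> RtoC 0) /\
  (forall n0 n1 n2, c n0 n1 n2 <> RtoC 0 -> (k <= n0)%nat).
Definition mult_q1 (c : nat -> nat -> nat -> C) (k : nat) : Prop :=
  (exists n0 n2, c n0 k n2 <> RtoC 0) /\
  (forall n0 n1 n2, c n0 n1 n2 <> RtoC 0 -> (k <= n1)%nat).
Definition mult_q2 (c : nat -> nat -> nat -> C) (k : nat) : Prop :=
  (exists n0 n1, c n0 n1 k <> RtoC 0) /\
  (forall n0 n1 n2, c n0 n1 n2 <> RtoC 0 -> (k <= n2)%nat).

(* Main.v *)
Require Import Defs.
From Stdlib Require Import Reals ZArith Lia Lra Psatz Classical FunctionalExtensionality.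
From Coquelicot Require Import Coquelicot.
Open Scope R_scope.
Local Open Scope bool_scope.

Lemma plusR (x y : R) : @plus R_AbelianMonoid x y = x + y.
Proof. reflexivity. Qed.

Ltac toR := match goal with |- ?x = ?y => change (@eq R x y) end; try change (@plus R_AbelianMonoid) with Rplus.

Lemma sum_n_ext_le {G : AbelianMonoid} (f g : nat -> G) n :
  (forall i, (i <= n)%nat -> f i = g i) -> sum_n f n = sum_n g n.
Proof.
  intros H. unfold sum_n. apply sum_n_m_ext_loc. intros k Hk. apply H; lia.
Qed.

Lemma sum_n_zero {G : AbelianMonoid} (f : nat -> G) n :
  (forall i, (i <= n)%nat -> f i = zero) -> sum_n f n = zero.
Proof.
  induction n; intros H.
  - rewrite sum_O. apply H; lia.
  - rewrite sum_Sn, IHn by (intros; apply H; lia). rewrite H by lia. apply plus_zero_l.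
Qed.

Lemma sum_n_extend {G : AbelianMonoid} (f : nat -> G) m M :
  (m <= M)%nat -> (forall i, (m < i <= M)%nat -> f i = zero) ->
  sum_n f M = sum_n f m.
Proof.
  induction M; intros Hm H.
  - assert (m = 0)%nat by lia. subst. reflexivity.
  - destruct (Nat.eq_dec m (S M)) as [->|Hne]; [reflexivity|].
    rewrite sum_Sn, IHM by (try lia; intros; apply H; lia).
    rewrite (H (S M)) by lia. apply plus_zero_r.
Qed.

Lemma sum_n_swap {G : AbelianMonoid} (f : nat -> nat -> G) n m :
  sum_n (fun i => sum_n (fun j => f i j) m) n =
  sum_n (fun j => sum_n (fun i => f i j) n) m.
Proof.
  induction n.
  - rewrite sum_O. apply sum_n_ext. intros j. rewrite sum_O. reflexivity.
  - rewrite sum_Sn, IHn, <- sum_n_plus. apply sum_n_ext. intros j.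
    rewrite sum_Sn. reflexivity.
Qed.

Lemma sum_n_shift0 {G : AbelianMonoid} (f : nat -> G) n :
  sum_n f (S n) = plus (f O) (sum_n (fun i => f (S i)) n).
Proof.
  induction n.
  - rewrite sum_Sn, !sum_O. reflexivity.
  - rewrite sum_Sn, IHn, sum_Sn. symmetry. apply plus_assoc.
Qed.

Lemma sum_n_delta {G : AbelianMonoid} (F : nat -> G) e n :
  sum_n (fun k => if Nat.eqb e k then F k else zero) n =
  if Nat.leb e n then F e else zero.
Proof.
  induction n.
  - rewrite sum_O. destruct e; simpl; reflexivity.
  - rewrite sum_Sn, IHn.
    destruct (Nat.eqb_spec e (S n)) as [->|Hne].
    + rewrite (proj2 (Nat.leb_nle _ _)) by lia.
      rewrite (proj2 (Nat.leb_le _ _)) by lia. apply plus_zero_l.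
    + rewrite plus_zero_r.
      destruct (Nat.leb_spec e n); destruct (Nat.leb_spec e (S n)); try reflexivity; lia.
Qed.

Lemma sum_n_if {G : AbelianMonoid} (b : bool) (F : nat -> G) n :
  sum_n (fun k => if b then F k else zero) n = if b then sum_n F n else zero.
Proof. destruct b; [reflexivity|]. apply sum_n_zero; auto. Qed.

Lemma sum_n_Rle (f g : nat -> R) n :
  (forall i, (i <= n)%nat -> f i <= g i) -> sum_n f n <= sum_n g n.
Proof.
  induction n; intros H.
  - rewrite !sum_O. apply H; lia.
  - rewrite !sum_Sn. apply Rplus_le_compat. apply IHn; intros; apply H; lia. apply H; lia.
Qed.

Lemma sum_n_nonneg (f : nat -> R) n :
  (forall i, (i <= n)%nat -> 0 <= f i) -> 0 <= sum_n f n.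
Proof.
  induction n; intros H.
  - rewrite sum_O. apply H; lia.
  - rewrite sum_Sn. change plus with Rplus.
    pose proof (IHn (fun i Hi => H i ltac:(lia))). pose proof (H (S n) (le_n _)). lra.
Qed.

Lemma sum_n_ge_term (f : nat -> R) n k :
  (k <= n)%nat -> (forall i, (i <= n)%nat -> 0 <= f i) -> f k <= sum_n f n.
Proof.
  induction n; intros Hk H.
  - assert (k = 0)%nat by lia; subst. rewrite sum_O; lra.
  - rewrite sum_Sn. destruct (Nat.eq_dec k (S n)) as [->|].
    + change (plus (sum_n f n) (f (S n))) with (sum_n f n + f (S n)).
      pose proof (sum_n_nonneg f n (fun i Hi => H i ltac:(lia))). lra.
    + change (plus (sum_n f n) (f (S n))) with (sum_n f n + f (S n)).
      pose proof (IHn ltac:(lia) (fun i Hi => H i ltac:(lia))). pose proof (H (S n) (le_n _)). lra.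
Qed.

Lemma Cmod_sum_n (f : nat -> C) n : Cmod (sum_n f n) <= sum_n (fun i => Cmod (f i)) n.
Proof. induction n.
  - rewrite !sum_O. lra.
  - rewrite !sum_Sn. change (Cmod (Cplus (sum_n f n) (f (S n))) <= sum_n (fun i => Cmod (f i)) n + Cmod (f (S n))).
    eapply Rle_trans. apply Cmod_triangle. lra. Qed.

Lemma sum_n_Rmult_l (a : R) (f : nat -> R) n :
  sum_n (fun i => a * f i) n = a * sum_n f n.
Proof. apply (sum_n_mult_l a f n). Qed.

Lemma sum_n_Rmult_r (a : R) (f : nat -> R) n :
  sum_n (fun i => f i * a) n = sum_n f n * a.
Proof. induction n.
  - rewrite !sum_O. reflexivity.
  - rewrite !sum_Sn, IHn. toR. change (@plus R_AbelianMonoid) with Rplus. ring. Qed.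

Lemma geom_sum (l : R) n : 0 <= l < 1 -> sum_n (fun i => l ^ i) n <= 1 / (1 - l).
Proof.
  intros Hl.
  assert (H: sum_n (fun i => l ^ i) n = (1 - l ^ (S n)) / (1 - l)).
  { induction n.
    - rewrite sum_O. simpl. field. lra.
    - rewrite sum_Sn, IHn, plusR. toR. simpl. field. lra. }
  rewrite H. apply Rmult_le_compat_r. apply Rlt_le, Rinv_0_lt_compat; lra.
  pose proof (pow_le l (S n) ltac:(lra)). lra.
Qed.

Lemma cexp_ext z w : Re z = Re w -> Im z = Im w -> cexp z = cexp w.
Proof. intros H1 H2. unfold cexp. rewrite H1, H2. reflexivity. Qed.

Lemma cexp_add z w : cexp (Cplus z w) = Cmult (cexp z) (cexp w).
Proof.
  destruct z as [x y], w as [u v]. unfold cexp, Cplus, Cmult; simpl.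
  rewrite exp_plus, cos_plus, sin_plus. f_equal; ring.
Qed.

Lemma cexp_pow z n : cexp (Cmult (RtoC (INR n)) z) = pow_n (cexp z) n.
Proof.
  induction n.
  - simpl pow_n. unfold one; simpl. unfold cexp, Cmult, RtoC; simpl.
    replace (0 * fst z - 0 * snd z) with 0 by ring. replace (0 * snd z + 0 * fst z) with 0 by ring.
    rewrite exp_0, cos_0, sin_0. f_equal; ring.
  - simpl pow_n. rewrite <- IHn. change (mult (cexp z) (cexp (Cmult (RtoC (INR n)) z))) with (Cmult (cexp z) (cexp (Cmult (RtoC (INR n)) z))).
    rewrite <- cexp_add. apply cexp_ext; destruct z; rewrite S_INR; unfold Cmult, Cplus, RtoC; simpl; ring.
Qed.

Lemma Cmod_cexp z : Cmod (cexp z) = exp (Re z).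
Proof.
  unfold Cmod, cexp. simpl fst; simpl snd.
  match goal with |- sqrt ?e = _ => replace e with (exp (Re z) ^ 2) end.
  - rewrite sqrt_pow2; [reflexivity|]. left; apply exp_pos.
  - pose proof (sin2_cos2 (Im z)). unfold Rsqr in *. simpl. nra.
Qed.

Definition iZ (i : nat) : Z :=
  if Nat.even i then Z.of_nat (Nat.div2 i) else (- Z.of_nat (Nat.div2 i) - 1)%Z.

Lemma iZ_even k : iZ (2 * k) = Z.of_nat k.
Proof. unfold iZ. rewrite Nat.div2_double, Nat.even_mul. reflexivity. Qed.

Lemma iZ_odd k : iZ (S (2 * k)) = (- Z.of_nat k - 1)%Z.
Proof. unfold iZ. rewrite Nat.div2_succ_double, Nat.even_succ, Nat.odd_mul. reflexivity. Qed.

Lemma iZ_bound i : (Z.of_nat i <= 2 * Z.abs (iZ i))%Z.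
Proof.
  destruct (Nat.Even_or_Odd i) as [[k ->]|[k ->]].
  - rewrite iZ_even. lia.
  - rewrite Nat.add_1_r, iZ_odd. lia.
Qed.

Lemma sym_sum {G : AbelianMonoid} (f : Z -> G) N :
  sum_n (fun i => f (Z.of_nat i - Z.of_nat N)%Z) (2 * N) = sum_n (fun i => f (iZ i)) (2 * N).
Proof.
  induction N.
  - simpl. rewrite !sum_O. replace (iZ 0) with 0%Z by reflexivity. reflexivity.
  - replace (2 * S N)%nat with (S (S (2 * N))) by lia.
    rewrite sum_n_shift0, sum_Sn.
    rewrite (sum_n_ext (fun i => f (Z.of_nat (S i) - Z.of_nat (S N))%Z) (fun i => f (Z.of_nat i - Z.of_nat N)%Z))
      by (intros; f_equal; lia).
    rewrite IHN. rewrite (sum_Sn _ (S (2 * N))), (sum_Sn _ (2 * N)).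
    replace (S (2 * N)) with (S (2 * N)) by reflexivity.
    rewrite iZ_odd. replace (S (S (2 * N))) with (2 * S N)%nat by lia. rewrite iZ_even.
    replace (Z.of_nat 0 - Z.of_nat (S N))%Z with (- Z.of_nat N - 1)%Z by lia.
    replace (Z.of_nat (S (S (2 * N))) - Z.of_nat (S N))%Z with (Z.of_nat (S N)) by lia.
    replace (Z.of_nat (2 * S N) - Z.of_nat (S N))%Z with (Z.of_nat (S N)) by lia.
    rewrite plus_assoc. f_equal. apply plus_comm.
Qed.

Definition uZ (a : nat) (g : Z) : Z := (2 * g + Z.of_nat a)%Z.
Definition ee (u : Z) : nat := Z.to_nat (u * u).

Definition coefg (a1 a2 b1 b2 : nat) (g1 g2 : Z) : C :=
  theta_term a1 a2 b1 b2 (RtoC 0) (RtoC 0) (RtoC 0) g1 g2.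

Lemma INR_ee u : INR (ee u) = IZR u * IZR u.
Proof. unfold ee. rewrite INR_IZR_INZ, Z2Nat.id by nia. apply mult_IZR. Qed.

Lemma IZR_uZ a g : IZR (uZ a g) = 2 * IZR g + INR a.
Proof. unfold uZ. rewrite plus_IZR, mult_IZR, INR_IZR_INZ. reflexivity. Qed.

Lemma term_factor a1 a2 b1 b2 z0 z1 z2 g1 g2 :
  theta_term a1 a2 b1 b2 z0 z1 z2 g1 g2 =
  Cmult (Cmult (Cmult (coefg a1 a2 b1 b2 g1 g2)
      (pow_n (q0 z0 z1 z2) (ee (uZ a1 g1))))
      (pow_n (q1 z0 z1 z2) (ee (uZ a1 g1 - uZ a2 g2)%Z)))
      (pow_n (q2 z0 z1 z2) (ee (uZ a2 g2))).
Proof.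
  unfold q0, q1, q2, coefg.
  rewrite <- !cexp_pow. unfold theta_term. rewrite <- !cexp_add.
  rewrite !INR_ee, minus_IZR, !IZR_uZ.
  destruct z0 as [x0 y0], z1 as [x1 y1], z2 as [x2 y2].
  apply cexp_ext; unfold Cmult, Cplus, RtoC, Ci; simpl; field.
Qed.

Lemma Cmod_term a1 a2 b1 b2 z0 z1 z2 g1 g2 :
  Cmod (theta_term a1 a2 b1 b2 z0 z1 z2 g1 g2) =
  exp (- PI * (Im z0 * ((IZR g1 + INR a1 / 2) * (IZR g1 + INR a1 / 2))
      + 2 * Im z1 * ((IZR g1 + INR a1 / 2) * (IZR g2 + INR a2 / 2))
      + Im z2 * ((IZR g2 + INR a2 / 2) * (IZR g2 + INR a2 / 2)))).
Proof.
  unfold theta_term. rewrite Cmod_cexp. f_equal.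
  destruct z0 as [x0 y0], z1 as [x1 y1], z2 as [x2 y2].
  unfold Cmult, Cplus, RtoC, Ci; simpl. ring.
Qed.

Definition Sq {G : AbelianMonoid} (F : nat -> nat -> G) (R : nat) : G :=
  sum_n (fun i => sum_n (fun j => F i j) R) R.

Lemma Sq_ext {G : AbelianMonoid} (F F' : nat -> nat -> G) R :
  (forall i j, (i <= R)%nat -> (j <= R)%nat -> F i j = F' i j) -> Sq F R = Sq F' R.
Proof. intros H. apply sum_n_ext_le. intros i Hi. apply sum_n_ext_le. intros j Hj. auto. Qed.

Lemma Sq_extend {G : AbelianMonoid} (F : nat -> nat -> G) R R' :
  (R <= R')%nat -> (forall i j, (R < i \/ R < j)%nat -> F i j = zero) -> Sq F R' = Sq F R.
Proof.
  intros HR H. unfold Sq.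
  rewrite (sum_n_extend _ R R') by (auto; intros i Hi; apply sum_n_zero; intros; apply H; lia).
  apply sum_n_ext_le. intros i Hi. apply sum_n_extend; auto. intros; apply H; lia.
Qed.

Lemma sum_n_Sq {G : AbelianMonoid} (F : nat -> nat -> nat -> G) M R :
  sum_n (fun k => Sq (F k) R) M = Sq (fun i j => sum_n (fun k => F k i j) M) R.
Proof.
  unfold Sq. rewrite sum_n_swap. apply sum_n_ext. intros i. apply sum_n_swap.
Qed.

Lemma Sq_plus {G : AbelianMonoid} (F F' : nat -> nat -> G) R :
  Sq (fun i j => plus (F i j) (F' i j)) R = plus (Sq F R) (Sq F' R).
Proof.
  unfold Sq. rewrite <- sum_n_plus. apply sum_n_ext. intros i. apply sum_n_plus.
Qed.

Lemma Sq_mult_r {K : Ring} (F : nat -> nat -> K) a R :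
  Sq (fun i j => mult (F i j) a) R = mult (Sq F R) a.
Proof.
  unfold Sq. rewrite <- sum_n_mult_r. apply sum_n_ext. intros i. apply sum_n_mult_r.
Qed.

Lemma Cmod_Sq (F : nat -> nat -> C) R : Cmod (Sq F R) <= Sq (fun i j => Cmod (F i j)) R.
Proof.
  unfold Sq. eapply Rle_trans. apply Cmod_sum_n. apply sum_n_Rle. intros. apply Cmod_sum_n.
Qed.

Lemma Sq_Rle (F F' : nat -> nat -> R) R :
  (forall i j, (i <= R)%nat -> (j <= R)%nat -> F i j <= F' i j) -> Sq F R <= Sq F' R.
Proof. intros H. apply sum_n_Rle. intros i Hi. apply sum_n_Rle. intros j Hj. auto. Qed.

Lemma Sq_prod (f : nat -> R) R :
  Sq (fun i j => f i * f j) R = sum_n f R * sum_n f R.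
Proof.
  unfold Sq. rewrite <- sum_n_Rmult_r. apply sum_n_ext. intros i. apply sum_n_Rmult_l.
Qed.

Lemma theta_partial_Sq a1 a2 b1 b2 z0 z1 z2 N :
  theta_partial a1 a2 b1 b2 z0 z1 z2 N =
  Sq (fun i j => theta_term a1 a2 b1 b2 z0 z1 z2 (iZ i) (iZ j)) (2 * N).
Proof.
  unfold theta_partial, Sq.
  rewrite (sum_n_ext _ (fun i => sum_n (fun j => theta_term a1 a2 b1 b2 z0 z1 z2
      (Z.of_nat i - Z.of_nat N)%Z (iZ j)) (2 * N))).
  2:{ intros i. apply (sym_sum (fun g => theta_term a1 a2 b1 b2 z0 z1 z2 (Z.of_nat i - Z.of_nat N)%Z g)). }
  apply (sym_sum (fun g => sum_n (fun j => theta_term a1 a2 b1 b2 z0 z1 z2 g (iZ j)) (2 * N))).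
Qed.

Definition Ez0 (a1 : nat) (i : nat) : nat := ee (uZ a1 (iZ i)).
Definition Ez2 (a2 : nat) (j : nat) : nat := ee (uZ a2 (iZ j)).
Definition Ez1 (a1 a2 : nat) (i j : nat) : nat := ee (uZ a1 (iZ i) - uZ a2 (iZ j))%Z.

Definition Fc (a1 a2 b1 b2 n0 n1 n2 i j : nat) : C :=
  if Nat.eqb (Ez0 a1 i) n0 then if Nat.eqb (Ez1 a1 a2 i j) n1 then if Nat.eqb (Ez2 a2 j) n2
  then coefg a1 a2 b1 b2 (iZ i) (iZ j) else zero else zero else zero.

Definition cc (a1 a2 b1 b2 : nat) (n0 n1 n2 : nat) : C :=
  Sq (Fc a1 a2 b1 b2 n0 n1 n2) (2 * (n0 + n2)).

Definition Tw (a1 a2 b1 b2 : nat) (w0 w1 w2 : C) (i j : nat) : C :=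
  Cmult (Cmult (Cmult (coefg a1 a2 b1 b2 (iZ i) (iZ j)) (pow_n w0 (Ez0 a1 i)))
    (pow_n w1 (Ez1 a1 a2 i j))) (pow_n w2 (Ez2 a2 j)).

Definition Hbox (a1 a2 : nat) (N i j : nat) (x : C) : C :=
  if Nat.leb (Ez0 a1 i) N then if Nat.leb (Ez1 a1 a2 i j) N then if Nat.leb (Ez2 a2 j) N
  then x else zero else zero else zero.

Lemma Sq_Cmult_r (F : nat -> nat -> C) a R :
  Sq (fun i j => Cmult (F i j) a) R = Cmult (Sq F R) a.
Proof. apply (Sq_mult_r (K := C_Ring)). Qed.

Lemma Cmult_zero_l (x : C) : Cmult zero x = zero.
Proof. apply (mult_zero_l (K := C_Ring)). Qed.

Lemma idx_bound a i : (a <= 1)%nat -> (i <= 2 * ee (uZ a (iZ i)))%nat.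
Proof.
  intros Ha. pose proof (iZ_bound i). unfold ee, uZ.
  set (g := iZ i) in *.
  assert (Hu : (Z.abs g <= Z.abs (2 * g + Z.of_nat a))%Z) by lia.
  assert (Hu2 : (Z.abs (2 * g + Z.of_nat a) <= (2 * g + Z.of_nat a) * (2 * g + Z.of_nat a))%Z) by nia.
  lia.
Qed.

Lemma box_sum_eq a1 a2 b1 b2 w0 w1 w2 N :
  (a1 <= 1)%nat -> (a2 <= 1)%nat ->
  box_sum (cc a1 a2 b1 b2) w0 w1 w2 N =
  Sq (fun i j => Hbox a1 a2 N i j (Tw a1 a2 b1 b2 w0 w1 w2 i j)) (4 * N).
Proof.
  intros Ha1 Ha2. unfold box_sum.
  transitivity (sum_n (fun n0 => sum_n (fun n1 => sum_n (fun n2 =>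
     Sq (fun i j => if Nat.eqb (Ez0 a1 i) n0 then if Nat.eqb (Ez1 a1 a2 i j) n1 then
       if Nat.eqb (Ez2 a2 j) n2 then Tw a1 a2 b1 b2 w0 w1 w2 i j else zero else zero else zero)
     (4 * N)) N) N) N).
  { apply sum_n_ext_le; intros n0 H0. apply sum_n_ext_le; intros n1 H1.
    apply sum_n_ext_le; intros n2 H2. unfold pterm, cc.
    rewrite (Sq_extend _ (2 * (n0 + n2)) (4 * N)).
    2: lia.
    2:{ intros i j Hij. unfold Fc.
        destruct (Nat.eqb_spec (Ez0 a1 i) n0); [|reflexivity].
        destruct (Nat.eqb_spec (Ez1 a1 a2 i j) n1); [|reflexivity].
        destruct (Nat.eqb_spec (Ez2 a2 j) n2); [|reflexivity].
        exfalso. pose proof (idx_bound a1 i Ha1). pose proof (idx_bound a2 j Ha2).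
        unfold Ez0, Ez2 in *. lia. }
    symmetry. rewrite <- !Sq_Cmult_r. apply Sq_ext. intros i j _ _.
    unfold Fc, Tw.
    destruct (Nat.eqb_spec (Ez0 a1 i) n0); [|rewrite !Cmult_zero_l; reflexivity].
    destruct (Nat.eqb_spec (Ez1 a1 a2 i j) n1); [|rewrite !Cmult_zero_l; reflexivity].
    destruct (Nat.eqb_spec (Ez2 a2 j) n2); [|rewrite !Cmult_zero_l; reflexivity].
    subst. reflexivity. }
  rewrite (sum_n_ext _ (fun n0 => sum_n (fun n1 => Sq (fun i j => sum_n (fun n2 =>
     if Nat.eqb (Ez0 a1 i) n0 then if Nat.eqb (Ez1 a1 a2 i j) n1 then
       if Nat.eqb (Ez2 a2 j) n2 then Tw a1 a2 b1 b2 w0 w1 w2 i j else zero else zero else zero) N)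
     (4 * N)) N)).
  2:{ intros n0. apply sum_n_ext. intros n1. apply sum_n_Sq. }
  rewrite (sum_n_ext _ (fun n0 => Sq (fun i j => sum_n (fun n1 => sum_n (fun n2 =>
     if Nat.eqb (Ez0 a1 i) n0 then if Nat.eqb (Ez1 a1 a2 i j) n1 then
       if Nat.eqb (Ez2 a2 j) n2 then Tw a1 a2 b1 b2 w0 w1 w2 i j else zero else zero else zero) N) N)
     (4 * N))).
  2:{ intros n0. apply sum_n_Sq. }
  rewrite sum_n_Sq. apply Sq_ext. intros i j _ _.
  unfold Hbox.
  rewrite (sum_n_ext _ (fun n0 => if Nat.eqb (Ez0 a1 i) n0 then
     sum_n (fun n1 => if Nat.eqb (Ez1 a1 a2 i j) n1 then
       sum_n (fun n2 => if Nat.eqb (Ez2 a2 j) n2 then Tw a1 a2 b1 b2 w0 w1 w2 i j else zero) N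
       else zero) N else zero)).
  2:{ intros n0. destruct (Nat.eqb (Ez0 a1 i) n0).
      - apply sum_n_ext. intros n1. destruct (Nat.eqb (Ez1 a1 a2 i j) n1); [reflexivity|].
        apply sum_n_zero; auto.
      - apply sum_n_zero. intros; apply sum_n_zero; auto. }
  rewrite sum_n_delta. destruct (Nat.leb (Ez0 a1 i) N); [|reflexivity].
  rewrite sum_n_delta. destruct (Nat.leb (Ez1 a1 a2 i j) N); [|reflexivity].
  rewrite sum_n_delta. reflexivity.
Qed.

Definition Hn (a1 a2 b1 b2 : nat) (w0 w1 w2 : C) (n0 n1 n2 i j : nat) : C :=
  if Nat.eqb (Ez0 a1 i) n0 then if Nat.eqb (Ez1 a1 a2 i j) n1 then
  if Nat.eqb (Ez2 a2 j) n2 then Tw a1 a2 b1 b2 w0 w1 w2 i j else zero else zero else zero.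

Lemma pterm_eq a1 a2 b1 b2 w0 w1 w2 N n0 n1 n2 :
  (a1 <= 1)%nat -> (a2 <= 1)%nat -> (n0 <= N)%nat -> (n1 <= N)%nat -> (n2 <= N)%nat ->
  pterm (cc a1 a2 b1 b2) w0 w1 w2 n0 n1 n2 = Sq (Hn a1 a2 b1 b2 w0 w1 w2 n0 n1 n2) (4 * N).
Proof.
  intros Ha1 Ha2 H0 H1 H2. unfold pterm, cc.
  rewrite <- (Sq_extend (Fc a1 a2 b1 b2 n0 n1 n2) (2 * (n0 + n2)) (4 * N)).
  2: lia.
  2:{ intros i j Hij. unfold Fc.
      destruct (Nat.eqb_spec (Ez0 a1 i) n0); [|reflexivity].
      destruct (Nat.eqb_spec (Ez1 a1 a2 i j) n1); [|reflexivity].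
      destruct (Nat.eqb_spec (Ez2 a2 j) n2); [|reflexivity].
      exfalso. pose proof (idx_bound a1 i Ha1). pose proof (idx_bound a2 j Ha2).
      unfold Ez0, Ez2 in *. lia. }
  symmetry. rewrite <- !Sq_Cmult_r. apply Sq_ext. intros i j _ _.
  unfold Fc, Hn, Tw.
  destruct (Nat.eqb_spec (Ez0 a1 i) n0); [|rewrite !Cmult_zero_l; reflexivity].
  destruct (Nat.eqb_spec (Ez1 a1 a2 i j) n1); [|rewrite !Cmult_zero_l; reflexivity].
  destruct (Nat.eqb_spec (Ez2 a2 j) n2); [|rewrite !Cmult_zero_l; reflexivity].
  subst. reflexivity.
Qed.

Lemma Cmod_zero : Cmod zero = 0.
Proof. apply Cmod_0. Qed.

Lemma box_abs_le a1 a2 b1 b2 w0 w1 w2 N :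
  (a1 <= 1)%nat -> (a2 <= 1)%nat ->
  box_abs_sum (cc a1 a2 b1 b2) w0 w1 w2 N <= Sq (fun i j => Cmod (Tw a1 a2 b1 b2 w0 w1 w2 i j)) (4 * N).
Proof.
  intros Ha1 Ha2. unfold box_abs_sum.
  eapply Rle_trans.
  { apply sum_n_Rle; intros n0 H0. apply sum_n_Rle; intros n1 H1. apply sum_n_Rle; intros n2 H2.
    rewrite (pterm_eq a1 a2 b1 b2 w0 w1 w2 N) by auto. apply Cmod_Sq. }
  rewrite (sum_n_ext _ (fun n0 => sum_n (fun n1 => Sq (fun i j => sum_n (fun n2 =>
     Cmod (Hn a1 a2 b1 b2 w0 w1 w2 n0 n1 n2 i j)) N) (4 * N)) N)).
  2:{ intros n0. apply sum_n_ext. intros n1. apply (sum_n_Sq (G := R_AbelianMonoid)). }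
  rewrite (sum_n_ext _ (fun n0 => Sq (fun i j => sum_n (fun n1 => sum_n (fun n2 =>
     Cmod (Hn a1 a2 b1 b2 w0 w1 w2 n0 n1 n2 i j)) N) N) (4 * N))).
  2:{ intros n0. apply (sum_n_Sq (G := R_AbelianMonoid)). }
  rewrite (sum_n_Sq (G := R_AbelianMonoid)). apply Sq_Rle. intros i j _ _.
  rewrite (sum_n_ext _ (fun n0 => if Nat.eqb (Ez0 a1 i) n0 then
     sum_n (fun n1 => if Nat.eqb (Ez1 a1 a2 i j) n1 then
       sum_n (fun n2 => if Nat.eqb (Ez2 a2 j) n2 then Cmod (Tw a1 a2 b1 b2 w0 w1 w2 i j) else zero) N
       else zero) N else zero)).
  2:{ intros n0. unfold Hn. destruct (Nat.eqb (Ez0 a1 i) n0).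
      - apply sum_n_ext. intros n1. destruct (Nat.eqb (Ez1 a1 a2 i j) n1).
        + apply sum_n_ext. intros n2. destruct (Nat.eqb (Ez2 a2 j) n2); [reflexivity|apply Cmod_zero].
        + apply sum_n_zero. intros. destruct (Nat.eqb (Ez2 a2 j) i0); apply Cmod_zero.
      - apply sum_n_zero. intros; apply sum_n_zero; intros. rewrite Cmod_zero. reflexivity. }
  pose proof (Cmod_ge_0 (Tw a1 a2 b1 b2 w0 w1 w2 i j)).
  rewrite sum_n_delta. destruct (Nat.leb (Ez0 a1 i) N); [|change (@zero R_AbelianMonoid) with 0; lra].
  rewrite sum_n_delta. destruct (Nat.leb (Ez1 a1 a2 i j) N); [|change (@zero R_AbelianMonoid) with 0; lra].
  rewrite sum_n_delta. destruct (Nat.leb (Ez2 a2 j) N); [lra|change (@zero R_AbelianMonoid) with 0; lra].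
Qed.

Lemma limC_iff (u : nat -> C) L : filterlim u eventually (locally L) <->
  forall eps : posreal, eventually (fun n => Cmod (Cminus (u n) L) < eps).
Proof. apply (@filterlim_locally_ball_norm C_AbsRing nat C_NormedModule). apply eventually_filter. Qed.

Lemma cauchy_C (u : nat -> C) (eps : nat -> R) :
  (forall e, 0 < e -> exists N0, forall N, (N0 <= N)%nat -> eps N < e) ->
  (forall N N', (N <= N')%nat -> Cmod (Cminus (u N') (u N)) <= eps N) ->
  exists L, filterlim u eventually (locally L).
Proof.
  intros He Hc.
  apply (proj1 (@filterlim_locally_cauchy nat (CompleteNormedModule.CompleteSpace _ C_CompleteNormedModule) eventually eventually_filter u)).
  intros e. destruct (He e (cond_pos e)) as [N0 HN0].
  exists (fun n => (N0 <= n)%nat). split. { exists N0. auto. }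
  intros m n Hm Hn.
  apply (@norm_compat1 C_AbsRing C_NormedModule).
  change (Cmod (Cminus (u n) (u m)) < e).
  destruct (Nat.le_ge_cases m n) as [Hmn|Hmn].
  - eapply Rle_lt_trans. apply Hc; auto. apply HN0; auto.
  - replace (Cminus (u n) (u m)) with (Copp (Cminus (u m) (u n))).
    + rewrite Cmod_opp. eapply Rle_lt_trans. apply Hc; auto. apply HN0; auto.
    + destruct (u n), (u m). unfold Copp, Cminus, Cplus, Copp. simpl. f_equal; ring.
Qed.

Lemma nat_above (r : R) : exists N : nat, r < INR N.
Proof.
  destruct (archimed r) as [H1 _]. exists (Z.to_nat (up r)).
  destruct (Z_lt_le_dec (up r) 0).
  - replace (Z.to_nat (up r)) with 0%nat by lia. simpl. apply IZR_lt in l. lra.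
  - rewrite INR_IZR_INZ, Z2Nat.id by lia. lra.
Qed.

Lemma decay (K c : R) : 0 < c -> forall e, 0 < e ->
  exists N0, forall N, (N0 <= N)%nat -> K * exp (- c * INR N) < e.
Proof.
  intros Hc e He. destruct (nat_above (Rabs K / (c * e))) as [N0 HN0].
  exists N0. intros N HN. apply le_INR in HN.
  assert (Hx : 1 + c * INR N <= exp (c * INR N)) by apply exp_ineq1_le.
  assert (Hpos : 0 < exp (c * INR N)) by apply exp_pos.
  replace (- c * INR N) with (- (c * INR N)) by ring. rewrite exp_Ropp.
  assert (H1 : Rabs K / (c * e) < INR N) by lra.
  assert (H2 : Rabs K < c * e * INR N).
  { apply (Rmult_lt_compat_l (c * e)) in H1; [|nra].
    replace (c * e * (Rabs K / (c * e))) with (Rabs K) in H1 by (field; lra). lra. }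
  assert (HK : K <= Rabs K) by apply RRle_abs.
  apply (Rmult_lt_reg_r (exp (c * INR N))); auto.
  rewrite Rmult_assoc, Rinv_l by lra. nra.
Qed.

Lemma lim_close (u v : nat -> C) (h : nat -> nat) (eps : nat -> R) L :
  filterlim u eventually (locally L) ->
  (forall N, (N <= h N)%nat) ->
  (forall e, 0 < e -> exists N0, forall N, (N0 <= N)%nat -> eps N < e) ->
  (forall N, Cmod (Cminus (v N) (u (h N))) <= eps N) ->
  filterlim v eventually (locally L).
Proof.
  intros Hu Hh He Hvu. apply limC_iff. intros e.
  pose proof (proj1 (limC_iff u L) Hu) as Hu'. destruct (Hu' (pos_div_2 e)) as [N1 HN1].
  destruct (He (e / 2) ltac:(destruct e; simpl; lra)) as [N2 HN2].
  exists (Nat.max N1 N2). intros N HN.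
  replace (Cminus (v N) L) with (Cplus (Cminus (v N) (u (h N))) (Cminus (u (h N)) L))
    by (destruct (v N), (u (h N)), L; unfold Cminus, Cplus, Copp; simpl; f_equal; ring).
  eapply Rle_lt_trans. apply Cmod_triangle.
  pose proof (Hvu N). pose proof (HN2 N ltac:(lia)). pose proof (HN1 (h N) ltac:(specialize (Hh N); lia)).
  simpl in *. lra.
Qed.

Lemma exp_le_mono x y : x <= y -> exp x <= exp y.
Proof. intros [H|H]. left; apply exp_increasing; auto. subst; lra. Qed.

Lemma exp_pow_INR b i : exp (- b * INR i) = exp (- b) ^ i.
Proof.
  induction i.
  - simpl. replace (- b * 0) with 0 by ring. apply exp_0.
  - rewrite S_INR. simpl. rewrite <- IHi, <- exp_plus. f_equal. ring.
Qed.

Lemma quad_ineq y0 y1 y2 x1 x2 : 0 < y0 -> 0 < y0 * y2 - y1 * y1 ->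
  (y0 * y2 - y1 * y1) * (x1 * x1 + x2 * x2) <=
  (y0 + y2) * (y0 * (x1 * x1) + 2 * y1 * (x1 * x2) + y2 * (x2 * x2)).
Proof.
  intros H0 HD.
  assert (E : (y0 + y2) * (y0 * (x1 * x1) + 2 * y1 * (x1 * x2) + y2 * (x2 * x2)) -
     (y0 * y2 - y1 * y1) * (x1 * x1 + x2 * x2) =
     (y0 * x1 + y1 * x2) * (y0 * x1 + y1 * x2) + (y1 * x1 + y2 * x2) * (y1 * x1 + y2 * x2)) by ring.
  pose proof (Rle_0_sqr (y0 * x1 + y1 * x2)). pose proof (Rle_0_sqr (y1 * x1 + y2 * x2)).
  unfold Rsqr in *. lra.
Qed.

Definition alpha (z0 z1 z2 : C) : R :=
  PI * (Im z0 * Im z2 - Im z1 * Im z1) / (Im z0 + Im z2).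

Lemma alpha_pos z0 z1 z2 : in_H2 z0 z1 z2 -> 0 < alpha z0 z1 z2.
Proof.
  intros [H0 HD]. unfold alpha.
  assert (0 < Im z2) by (pose proof (Rle_0_sqr (Im z1)); unfold Rsqr in *; nra).
  pose proof PI_RGT_0. apply Rdiv_lt_0_compat; nra.
Qed.

Definition xr (a : nat) (g : Z) : R := IZR g + INR a / 2.

Lemma T_X_bound a1 a2 b1 b2 z0 z1 z2 g1 g2 : in_H2 z0 z1 z2 ->
  Cmod (theta_term a1 a2 b1 b2 z0 z1 z2 g1 g2) <=
  exp (- alpha z0 z1 z2 * (xr a1 g1 * xr a1 g1 + xr a2 g2 * xr a2 g2)).
Proof.
  intros [H0 HD]. rewrite Cmod_term. apply exp_le_mono. unfold alpha, xr.
  assert (0 < Im z2) by (pose proof (Rle_0_sqr (Im z1)); unfold Rsqr in *; nra).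
  pose proof PI_RGT_0.
  pose proof (quad_ineq (Im z0) (Im z1) (Im z2) (IZR g1 + INR a1 / 2) (IZR g2 + INR a2 / 2) H0 HD).
  set (X := (IZR g1 + INR a1 / 2) * (IZR g1 + INR a1 / 2) + (IZR g2 + INR a2 / 2) * (IZR g2 + INR a2 / 2)) in *.
  set (Q := Im z0 * ((IZR g1 + INR a1 / 2) * (IZR g1 + INR a1 / 2)) +
     2 * Im z1 * ((IZR g1 + INR a1 / 2) * (IZR g2 + INR a2 / 2)) +
     Im z2 * ((IZR g2 + INR a2 / 2) * (IZR g2 + INR a2 / 2))) in *.
  assert (Q >= (Im z0 * Im z2 - Im z1 * Im z1) / (Im z0 + Im z2) * X).
  { apply Rle_ge. unfold Rdiv. rewrite Rmult_assoc, (Rmult_comm (/ _)).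
    apply (Rmult_le_reg_l (Im z0 + Im z2)); [lra|].
    replace ((Im z0 + Im z2) * ((Im z0 * Im z2 - Im z1 * Im z1) * (X * / (Im z0 + Im z2))))
      with ((Im z0 * Im z2 - Im z1 * Im z1) * X) by (field; lra). lra. }
  replace (- (PI * (Im z0 * Im z2 - Im z1 * Im z1) / (Im z0 + Im z2)) * X)
    with (- PI * ((Im z0 * Im z2 - Im z1 * Im z1) / (Im z0 + Im z2) * X)) by (field; lra).
  apply Rge_le in H3. apply Rmult_le_compat_neg_l; lra.
Qed.

Lemma xr_uZ a g : xr a g = IZR (uZ a g) / 2.
Proof. unfold xr. rewrite IZR_uZ. field. Qed.

Lemma idx_sq a i : (a <= 1)%nat -> INR i * INR i <= 16 * (xr a (iZ i) * xr a (iZ i)).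
Proof.
  intros Ha. rewrite xr_uZ. pose proof (iZ_bound i).
  set (g := iZ i) in *.
  assert (Hz : (Z.of_nat i * Z.of_nat i <= 4 * (uZ a g * uZ a g))%Z).
  { unfold uZ. assert (Hu : (Z.abs g <= Z.abs (2 * g + Z.of_nat a))%Z) by lia. nia. }
  apply IZR_le in Hz. rewrite !mult_IZR, <- INR_IZR_INZ in Hz.
  replace (16 * (IZR (uZ a g) / 2 * (IZR (uZ a g) / 2))) with (IZR 4 * (IZR (uZ a g) * IZR (uZ a g))) by (simpl; field).
  exact Hz.
Qed.

Lemma INR_E0 a1 i : INR (Ez0 a1 i) = 4 * (xr a1 (iZ i) * xr a1 (iZ i)).
Proof. unfold Ez0. rewrite INR_ee, !xr_uZ. field. Qed.
Lemma INR_E2 a2 j : INR (Ez2 a2 j) = 4 * (xr a2 (iZ j) * xr a2 (iZ j)).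
Proof. unfold Ez2. rewrite INR_ee, !xr_uZ. field. Qed.
Lemma INR_E1 a1 a2 i j : INR (Ez1 a1 a2 i j) = 4 * ((xr a1 (iZ i) - xr a2 (iZ j)) * (xr a1 (iZ i) - xr a2 (iZ j))).
Proof. unfold Ez1. rewrite INR_ee, minus_IZR, !xr_uZ. field. Qed.

Lemma nat_sq_ge n : INR n <= INR n * INR n.
Proof. destruct n. simpl; lra. rewrite S_INR. pose proof (pos_INR n). nra. Qed.

Lemma B_out a1 a2 b1 b2 z0 z1 z2 i j m :
  (a1 <= 1)%nat -> (a2 <= 1)%nat -> in_H2 z0 z1 z2 -> (m < i \/ m < j)%nat ->
  Cmod (theta_term a1 a2 b1 b2 z0 z1 z2 (iZ i) (iZ j)) <=
  exp (- (alpha z0 z1 z2 / 32) * INR i) * exp (- (alpha z0 z1 z2 / 32) * INR j)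
    * exp (- (alpha z0 z1 z2 / 32) * INR m).
Proof.
  intros Ha1 Ha2 Hz Hm. eapply Rle_trans. apply T_X_bound; auto.
  rewrite <- !exp_plus. apply exp_le_mono.
  pose proof (alpha_pos _ _ _ Hz). set (al := alpha z0 z1 z2) in *.
  pose proof (idx_sq a1 i Ha1). pose proof (idx_sq a2 j Ha2).
  set (X1 := xr a1 (iZ i) * xr a1 (iZ i)) in *. set (X2 := xr a2 (iZ j) * xr a2 (iZ j)) in *.
  pose proof (pos_INR i). pose proof (pos_INR j). pose proof (pos_INR m).
  assert (Hq : INR i * INR i + INR j * INR j >= (INR i + INR j) / 2 + INR m / 2).
  { pose proof (nat_sq_ge i). pose proof (nat_sq_ge j).
    destruct Hm as [Hm|Hm]; apply le_INR in Hm; rewrite S_INR in Hm; nra. }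
  nra.
Qed.

Lemma B_all a1 a2 b1 b2 z0 z1 z2 i j :
  (a1 <= 1)%nat -> (a2 <= 1)%nat -> in_H2 z0 z1 z2 ->
  Cmod (theta_term a1 a2 b1 b2 z0 z1 z2 (iZ i) (iZ j)) <=
  exp (- (alpha z0 z1 z2 / 32) * INR i) * exp (- (alpha z0 z1 z2 / 32) * INR j).
Proof.
  intros Ha1 Ha2 Hz. eapply Rle_trans. apply T_X_bound; auto.
  rewrite <- !exp_plus. apply exp_le_mono.
  pose proof (alpha_pos _ _ _ Hz). set (al := alpha z0 z1 z2) in *.
  pose proof (idx_sq a1 i Ha1). pose proof (idx_sq a2 j Ha2).
  set (X1 := xr a1 (iZ i) * xr a1 (iZ i)) in *. set (X2 := xr a2 (iZ j) * xr a2 (iZ j)) in *.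
  pose proof (pos_INR i). pose proof (pos_INR j).
  assert (INR i <= INR i * INR i \/ INR i = 0).
  { destruct i. right; reflexivity. left. rewrite S_INR in *. pose proof (pos_INR i). nra. }
  assert (INR j <= INR j * INR j \/ INR j = 0).
  { destruct j. right; reflexivity. left. rewrite S_INR in *. pose proof (pos_INR j). nra. }
  destruct H4, H5; nra.
Qed.

Lemma B_box a1 a2 b1 b2 z0 z1 z2 i j N :
  (a1 <= 1)%nat -> (a2 <= 1)%nat -> in_H2 z0 z1 z2 ->
  (N < Ez0 a1 i \/ N < Ez1 a1 a2 i j \/ N < Ez2 a2 j)%nat ->
  Cmod (theta_term a1 a2 b1 b2 z0 z1 z2 (iZ i) (iZ j)) <=
  exp (- (alpha z0 z1 z2 / 32) * INR i) * exp (- (alpha z0 z1 z2 / 32) * INR j)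
    * exp (- (alpha z0 z1 z2 / 16) * INR N).
Proof.
  intros Ha1 Ha2 Hz HN. eapply Rle_trans. apply T_X_bound; auto.
  rewrite <- !exp_plus. apply exp_le_mono.
  pose proof (alpha_pos _ _ _ Hz). set (al := alpha z0 z1 z2) in *.
  pose proof (idx_sq a1 i Ha1). pose proof (idx_sq a2 j Ha2).
  assert (HX : INR N <= 8 * (xr a1 (iZ i) * xr a1 (iZ i) + xr a2 (iZ j) * xr a2 (iZ j))).
  { pose proof (Rle_0_sqr (xr a1 (iZ i) + xr a2 (iZ j))). unfold Rsqr in *.
    pose proof (Rle_0_sqr (xr a1 (iZ i))). pose proof (Rle_0_sqr (xr a2 (iZ j))). unfold Rsqr in *.
    destruct HN as [HN|[HN|HN]]; apply lt_INR in HN;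
    [rewrite INR_E0 in HN|rewrite INR_E1 in HN|rewrite INR_E2 in HN]; nra. }
  set (X1 := xr a1 (iZ i) * xr a1 (iZ i)) in *. set (X2 := xr a2 (iZ j) * xr a2 (iZ j)) in *.
  pose proof (pos_INR i). pose proof (pos_INR j). pose proof (nat_sq_ge i). pose proof (nat_sq_ge j).
  nra.
Qed.

Lemma sum_exp_bound b R : 0 < b ->
  Sq (fun i j => exp (- b * INR i) * exp (- b * INR j)) R <= (1 / (1 - exp (- b))) * (1 / (1 - exp (- b))).
Proof.
  intros Hb. rewrite (Sq_prod (fun i => exp (- b * INR i))).
  assert (Hl : 0 <= exp (- b) < 1).
  { split. left; apply exp_pos. rewrite <- exp_0. apply exp_increasing. lra. }
  assert (H : sum_n (fun i => exp (- b * INR i)) R <= 1 / (1 - exp (- b))).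
  { rewrite (sum_n_ext _ (fun i => exp (- b) ^ i)) by (intros; apply exp_pow_INR). apply geom_sum; auto. }
  assert (H0 : 0 <= sum_n (fun i => exp (- b * INR i)) R).
  { apply sum_n_nonneg. intros; left; apply exp_pos. }
  apply Rmult_le_compat; auto.
Qed.

Lemma split_Sq (F : nat -> nat -> C) (p : nat -> nat -> bool) R :
  Sq F R = Cplus (Sq (fun i j => if p i j then F i j else zero) R) (Sq (fun i j => if p i j then zero else F i j) R).
Proof.
  rewrite <- (Sq_plus (G := C_AbelianMonoid)). apply Sq_ext. intros i j _ _.
  destruct (p i j). symmetry; apply (plus_zero_r (G := C_AbelianMonoid)).
  symmetry; apply (plus_zero_l (G := C_AbelianMonoid)).
Qed.

Lemma Cminus_plus_l (A B : C) : Cminus (Cplus A B) A = B.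
Proof. destruct A, B. unfold Cminus, Cplus, Copp. simpl. f_equal; ring. Qed.

Lemma Cminus_plus_r (A B : C) : Cmod (Cminus A (Cplus A B)) = Cmod B.
Proof.
  replace (Cminus A (Cplus A B)) with (Copp B) by (destruct A, B; unfold Cminus, Cplus, Copp; simpl; f_equal; ring).
  apply Cmod_opp.
Qed.

Lemma Sq_Rmult_r (F : nat -> nat -> R) a R :
  Sq (fun i j => F i j * a) R = Sq F R * a.
Proof. apply (Sq_mult_r (K := R_Ring)). Qed.

Lemma Sq_nonneg (F : nat -> nat -> R) R : (forall i j, 0 <= F i j) -> 0 <= Sq F R.
Proof. intros H. apply sum_n_nonneg. intros. apply sum_n_nonneg. auto. Qed.

Lemma expansion_exists a1 a2 b1 b2 : (a1 <= 1)%nat -> (a2 <= 1)%nat ->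
  theta_expansion a1 a2 b1 b2 (cc a1 a2 b1 b2).
Proof.
  intros Ha1 Ha2 z0 z1 z2 Hz.
  set (T := fun i j => theta_term a1 a2 b1 b2 z0 z1 z2 (iZ i) (iZ j)).
  pose proof (alpha_pos _ _ _ Hz) as Hal. set (al := alpha z0 z1 z2) in *.
  set (K := (1 / (1 - exp (- (al / 32)))) * (1 / (1 - exp (- (al / 32))))).
  assert (HK : forall R, Sq (fun i j => exp (- (al / 32) * INR i) * exp (- (al / 32) * INR j)) R <= K)
    by (intros; apply sum_exp_bound; lra).
  assert (HK0 : 0 <= K) by (eapply Rle_trans; [|apply (HK 0%nat)]; apply Sq_nonneg; intros; left;
     apply Rmult_lt_0_compat; apply exp_pos).
  destruct (cauchy_C (theta_partial a1 a2 b1 b2 z0 z1 z2)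
     (fun N => K * exp (- (2 * (al / 32)) * INR N))) as [v Hv].
  { intros e He. apply decay; auto. lra. }
  { intros N N' HN. rewrite !theta_partial_Sq. fold T.
    rewrite (split_Sq T (fun i j => Nat.leb i (2 * N) && Nat.leb j (2 * N)) (2 * N')).
    rewrite (Sq_extend (fun i j => if Nat.leb i (2 * N) && Nat.leb j (2 * N) then T i j else zero) (2 * N) (2 * N')).
    2: lia.
    2:{ intros i j [H|H]; [rewrite (proj2 (Nat.leb_nle i (2 * N))) by lia; reflexivity|].
        rewrite (proj2 (Nat.leb_nle j (2 * N))) by lia. rewrite Bool.andb_false_r. reflexivity. }
    rewrite (Sq_ext (fun i j => if Nat.leb i (2 * N) && Nat.leb j (2 * N) then T i j else zero) T (2 * N)).
    2:{ intros i j Hi Hj. rewrite (proj2 (Nat.leb_le i (2 * N))), (proj2 (Nat.leb_le j (2 * N))) by lia. reflexivity. }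
    rewrite Cminus_plus_l. eapply Rle_trans. apply Cmod_Sq.
    eapply Rle_trans.
    { apply (Sq_Rle _ (fun i j => exp (- (al / 32) * INR i) * exp (- (al / 32) * INR j) * exp (- (al / 32) * INR (2 * N)))).
      intros i j _ _. destruct (Nat.leb_spec i (2 * N)); destruct (Nat.leb_spec j (2 * N)); cbn [andb].
      - rewrite Cmod_zero. apply Rmult_le_pos; [apply Rmult_le_pos|]; left; apply exp_pos.
      - unfold T; apply B_out; auto.
      - unfold T; apply B_out; auto.
      - unfold T; apply B_out; auto. }
    rewrite Sq_Rmult_r. rewrite mult_INR.
    replace (- (2 * (al / 32)) * INR N) with (- (al / 32) * (INR 2 * INR N)) by (simpl; ring).
    apply Rmult_le_compat_r. left; apply exp_pos. apply HK. }
  exists v. split; [exact Hv|]. split.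
  - exists K. intros N. eapply Rle_trans. apply box_abs_le; auto.
    eapply Rle_trans; [|apply (HK (4 * N)%nat)]. apply Sq_Rle. intros i j _ _.
    unfold Tw. rewrite <- term_factor. apply B_all; auto.
  - apply (lim_close (theta_partial a1 a2 b1 b2 z0 z1 z2) _ (fun N => 2 * N)%nat
        (fun N => K * exp (- (al / 16) * INR N)) v Hv).
    + intros; lia.
    + intros e He. apply decay; auto. lra.
    + intros N. rewrite box_sum_eq by auto. rewrite theta_partial_Sq. fold T.
      replace (2 * (2 * N))%nat with (4 * N)%nat by lia.
      rewrite (split_Sq T (fun i j => Nat.leb (Ez0 a1 i) N && Nat.leb (Ez1 a1 a2 i j) N && Nat.leb (Ez2 a2 j) N) (4 * N)).
      rewrite (Sq_ext (fun i j => Hbox a1 a2 N i j (Tw a1 a2 b1 b2 (q0 z0 z1 z2) (q1 z0 z1 z2) (q2 z0 z1 z2) i j))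
          (fun i j => if Nat.leb (Ez0 a1 i) N && Nat.leb (Ez1 a1 a2 i j) N && Nat.leb (Ez2 a2 j) N then T i j else zero)).
      2:{ intros i j _ _. unfold Hbox, Tw, T. rewrite <- term_factor.
          destruct (Nat.leb (Ez0 a1 i) N), (Nat.leb (Ez1 a1 a2 i j) N), (Nat.leb (Ez2 a2 j) N); reflexivity. }
      rewrite Cminus_plus_r. eapply Rle_trans. apply Cmod_Sq.
      eapply Rle_trans.
      { apply (Sq_Rle _ (fun i j => exp (- (al / 32) * INR i) * exp (- (al / 32) * INR j) * exp (- (al / 16) * INR N))).
        intros i j _ _.
        destruct (Nat.leb_spec (Ez0 a1 i) N); destruct (Nat.leb_spec (Ez1 a1 a2 i j) N);
          destruct (Nat.leb_spec (Ez2 a2 j) N); cbn [andb];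
          [rewrite Cmod_zero; apply Rmult_le_pos; [apply Rmult_le_pos|]; left; apply exp_pos|..];
          (unfold T; apply B_box; [exact Ha1|exact Ha2|exact Hz|];
           first [left; assumption | right; left; assumption | right; right; assumption]). }
      rewrite Sq_Rmult_r. apply Rmult_le_compat_r. left; apply exp_pos. apply HK.
Qed.

Lemma pow_le1 h t : 0 <= h <= 1 -> h ^ t <= 1.
Proof.
  intros Hh. induction t; simpl. lra.
  pose proof (pow_le h t ltac:(lra)). nra.
Qed.

Lemma pow_anti h m n : 0 <= h <= 1 -> (m <= n)%nat -> h ^ n <= h ^ m.
Proof.
  intros Hh Hmn. replace n with (m + (n - m))%nat by lia. rewrite pow_add.
  pose proof (pow_le h m ltac:(lra)). pose proof (pow_le1 h (n - m) Hh). nra.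
Qed.

Lemma pow_split u h k t : 0 <= u <= h -> u ^ (k + 1 + t) <= u ^ k * u * h ^ t.
Proof.
  intros Hu. rewrite !pow_add, pow_1.
  pose proof (pow_incr u h t Hu). pose proof (pow_le u k ltac:(lra)).
  apply Rmult_le_compat_l; [nra|auto].
Qed.

Lemma pow_n_RtoC (x : R) n : pow_n (RtoC x) n = RtoC (x ^ n).
Proof.
  induction n. reflexivity.
  simpl pow_n. rewrite IHn. change (mult (RtoC x) (RtoC (x ^ n))) with (Cmult (RtoC x) (RtoC (x ^ n))).
  unfold Cmult, RtoC. simpl. f_equal; ring.
Qed.

Lemma Cmod_RtoC' (x : R) : 0 <= x -> Cmod (RtoC x) = x.
Proof. intros H. rewrite Cmod_R. apply Rabs_right. lra. Qed.

Definition S3 (F : nat -> nat -> nat -> C) (N : nat) : C :=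
  sum_n (fun i => sum_n (fun j => sum_n (fun k => F i j k) N) N) N.

Lemma triple_split (F : nat -> nat -> nat -> C) N k0 k1 k2 :
  (k0 <= N)%nat -> (k1 <= N)%nat -> (k2 <= N)%nat ->
  S3 F N = Cplus (F k0 k1 k2) (S3 (fun n0 n1 n2 =>
     if Nat.eqb k0 n0 then if Nat.eqb k1 n1 then if Nat.eqb k2 n2 then zero
     else F n0 n1 n2 else F n0 n1 n2 else F n0 n1 n2) N).
Proof.
  intros H0 H1 H2. unfold S3.
  set (D := fun n0 n1 n2 => if Nat.eqb k0 n0 then if Nat.eqb k1 n1 then if Nat.eqb k2 n2 then F k0 k1 k2
     else (zero : C) else zero else zero).
  set (G := fun n0 n1 n2 => if Nat.eqb k0 n0 then if Nat.eqb k1 n1 then if Nat.eqb k2 n2 then zero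
     else F n0 n1 n2 else F n0 n1 n2 else F n0 n1 n2).
  transitivity (sum_n (fun i => sum_n (fun j => sum_n (fun k => plus (D i j k) (G i j k)) N) N) N).
  { apply sum_n_ext; intros i; apply sum_n_ext; intros j; apply sum_n_ext; intros k.
    unfold D, G. destruct (Nat.eqb_spec k0 i); [|symmetry; apply plus_zero_l].
    destruct (Nat.eqb_spec k1 j); [|symmetry; apply plus_zero_l].
    destruct (Nat.eqb_spec k2 k); [|symmetry; apply plus_zero_l].
    subst. symmetry; apply plus_zero_r. }
  rewrite (sum_n_ext _ (fun i => plus (sum_n (fun j => sum_n (fun k => D i j k) N) N)
     (sum_n (fun j => sum_n (fun k => G i j k) N) N))).
  2:{ intros i. rewrite <- sum_n_plus. apply sum_n_ext. intros j. apply sum_n_plus. }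
  rewrite sum_n_plus. f_equal.
  unfold D.
  rewrite (sum_n_ext _ (fun n0 => if Nat.eqb k0 n0 then
     sum_n (fun n1 => if Nat.eqb k1 n1 then
       sum_n (fun n2 => if Nat.eqb k2 n2 then F k0 k1 k2 else zero) N
       else zero) N else zero)).
  2:{ intros n0. destruct (Nat.eqb k0 n0).
      - apply sum_n_ext. intros n1. destruct (Nat.eqb k1 n1); [reflexivity|].
        apply sum_n_zero; auto.
      - apply sum_n_zero. intros; apply sum_n_zero; auto. }
  rewrite sum_n_delta, (proj2 (Nat.leb_le _ _) H0).
  rewrite sum_n_delta, (proj2 (Nat.leb_le _ _) H1).
  rewrite sum_n_delta, (proj2 (Nat.leb_le _ _) H2). reflexivity.
Qed.

Lemma Cmod_S3 (F : nat -> nat -> nat -> C) N :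
  Cmod (S3 F N) <= sum_n (fun i => sum_n (fun j => sum_n (fun k => Cmod (F i j k)) N) N) N.
Proof.
  unfold S3. eapply Rle_trans. apply Cmod_sum_n. apply sum_n_Rle; intros.
  eapply Rle_trans. apply Cmod_sum_n. apply sum_n_Rle; intros. apply Cmod_sum_n.
Qed.

Lemma sum3_half N : sum_n (fun i => sum_n (fun j => sum_n (fun k => (/2) ^ i * (/2) ^ j * (/2) ^ k) N) N) N <= 8.
Proof.
  assert (Hg : sum_n (fun i => (/2) ^ i) N <= 2).
  { pose proof (geom_sum (/2) N ltac:(lra)). replace (1 / (1 - / 2)) with 2 in H by field. exact H. }
  assert (Hg0 : 0 <= sum_n (fun i => (/2) ^ i) N) by (apply sum_n_nonneg; intros; apply pow_le; lra).
  rewrite (sum_n_ext _ (fun i => (/2) ^ i * (sum_n (fun j => (/2) ^ j) N * sum_n (fun k => (/2) ^ k) N))).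
  2:{ intros i.
      rewrite (sum_n_ext _ (fun j => ((/2) ^ i * (/2) ^ j) * sum_n (fun k => (/2) ^ k) N))
        by (intros j; rewrite <- sum_n_Rmult_l; reflexivity).
      rewrite sum_n_Rmult_r, sum_n_Rmult_l. toR. rewrite Rmult_assoc. reflexivity. }
  rewrite sum_n_Rmult_r. apply Rle_trans with (2 * (2 * 2)); [|lra].
  apply Rmult_le_compat; [exact Hg0| |exact Hg|].
  apply Rmult_le_pos; exact Hg0.
  apply Rmult_le_compat; [exact Hg0|exact Hg0|exact Hg|exact Hg].
Qed.

Lemma lex_ind (P : nat -> nat -> nat -> Prop) :
  (forall k0 k1 k2, (forall n0 n1 n2, (n0 < k0 \/ (n0 = k0 /\ n1 < k1) \/ (n0 = k0 /\ n1 = k1 /\ n2 < k2))%nat ->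
     P n0 n1 n2) -> P k0 k1 k2) ->
  forall k0 k1 k2, P k0 k1 k2.
Proof.
  intros H k0. induction k0 as [k0 IH0] using lt_wf_ind.
  intros k1. induction k1 as [k1 IH1] using lt_wf_ind.
  intros k2. induction k2 as [k2 IH2] using lt_wf_ind.
  apply H. intros n0 n1 n2 [Hl|[[-> Hl]|[-> [-> Hl]]]]; auto.
Qed.

Lemma prod3_le a b c a' b' c' : 0 <= a <= a' -> 0 <= b <= b' -> 0 <= c <= c' -> a * b * c <= a' * b' * c'.
Proof. intros. apply Rmult_le_compat; try apply Rmult_le_compat; try apply Rmult_le_pos; lra. Qed.

Lemma mono_bound (h dl u0 u1 u2 : R) k0 k1 k2 n0 n1 n2 :
  h = / 2 -> 0 < dl <= 1 ->
  0 <= u0 <= h -> 0 <= u1 <= h -> 0 <= u2 <= h ->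
  u2 = dl * h ^ (k0 + k1 + k2 + 1) ->
  u1 = dl * u2 ^ k2 * h ^ (k0 + k1 + k2 + 1) ->
  u0 = dl * u1 ^ k1 * u2 ^ k2 * h ^ (k0 + k1 + k2 + 1) ->
  (k0 < n0 \/ (n0 = k0 /\ k1 < n1) \/ (n0 = k0 /\ n1 = k1 /\ k2 < n2))%nat ->
  u0 ^ n0 * u1 ^ n1 * u2 ^ n2 <= dl * (u0 ^ k0 * u1 ^ k1 * u2 ^ k2) * (h ^ n0 * h ^ n1 * h ^ n2).
Proof.
  intros Hh Hd H0 H1 H2 E2 E1 E0 Hc.
  set (K := (k0 + k1 + k2 + 1)%nat) in *.
  assert (Hh0 : 0 <= h <= 1) by lra.
  assert (Hp : forall x n, 0 <= x -> 0 <= x ^ n) by (intros; apply pow_le; auto).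
  pose proof (Hp u0 k0 ltac:(lra)). pose proof (Hp u1 k1 ltac:(lra)). pose proof (Hp u2 k2 ltac:(lra)).
  destruct Hc as [Hc|[[-> Hc]|[-> [-> Hc]]]].
  - destruct (Nat.le_exists_sub (k0 + 1) n0 ltac:(lia)) as [t [-> _]].
    replace (t + (k0 + 1))%nat with (k0 + 1 + t)%nat by lia.
    eapply Rle_trans.
    { apply (prod3_le _ _ _ (u0 ^ k0 * u0 * h ^ t) (h ^ n1) (h ^ n2)). split; [apply Hp; lra|]. apply pow_split; lra.
      split; [apply Hp; lra|apply pow_incr; lra]. split; [apply Hp; lra|apply pow_incr; lra]. }
    replace (u0 ^ k0 * u0 * h ^ t * h ^ n1 * h ^ n2) with
      ((dl * (u0 ^ k0 * u1 ^ k1 * u2 ^ k2) * h ^ n1 * h ^ n2) * (h ^ K * h ^ t))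
      by (rewrite E0; ring).
    replace (dl * (u0 ^ k0 * u1 ^ k1 * u2 ^ k2) * (h ^ (k0 + 1 + t) * h ^ n1 * h ^ n2)) with
      ((dl * (u0 ^ k0 * u1 ^ k1 * u2 ^ k2) * h ^ n1 * h ^ n2) * h ^ (k0 + 1 + t)) by ring.
    apply Rmult_le_compat_l.
    { repeat apply Rmult_le_pos; try apply Hp; lra. }
    rewrite <- pow_add. apply pow_anti; auto. unfold K; lia.
  - destruct (Nat.le_exists_sub (k1 + 1) n1 ltac:(lia)) as [t [-> _]].
    replace (t + (k1 + 1))%nat with (k1 + 1 + t)%nat by lia.
    eapply Rle_trans.
    { apply (prod3_le _ _ _ (u0 ^ k0) (u1 ^ k1 * u1 * h ^ t) (h ^ n2)). split; [apply Hp; lra|lra].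
      split; [apply Hp; lra|apply pow_split; lra]. split; [apply Hp; lra|apply pow_incr; lra]. }
    replace (u0 ^ k0 * (u1 ^ k1 * u1 * h ^ t) * h ^ n2) with
      ((dl * (u0 ^ k0 * u1 ^ k1 * u2 ^ k2) * h ^ n2) * (h ^ K * h ^ t))
      by (rewrite E1; ring).
    replace (dl * (u0 ^ k0 * u1 ^ k1 * u2 ^ k2) * (h ^ k0 * h ^ (k1 + 1 + t) * h ^ n2)) with
      ((dl * (u0 ^ k0 * u1 ^ k1 * u2 ^ k2) * h ^ n2) * (h ^ k0 * h ^ (k1 + 1 + t))) by ring.
    apply Rmult_le_compat_l.
    { repeat apply Rmult_le_pos; try apply Hp; lra. }
    rewrite <- !pow_add. apply pow_anti; auto. unfold K; lia.
  - destruct (Nat.le_exists_sub (k2 + 1) n2 ltac:(lia)) as [t [-> _]].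
    replace (t + (k2 + 1))%nat with (k2 + 1 + t)%nat by lia.
    eapply Rle_trans.
    { apply (prod3_le _ _ _ (u0 ^ k0) (u1 ^ k1) (u2 ^ k2 * u2 * h ^ t)). split; [apply Hp; lra|lra]. split; [apply Hp; lra|lra].
      split; [apply Hp; lra|apply pow_split; lra]. }
    replace (u0 ^ k0 * u1 ^ k1 * (u2 ^ k2 * u2 * h ^ t)) with
      ((dl * (u0 ^ k0 * u1 ^ k1 * u2 ^ k2)) * (h ^ K * h ^ t))
      by (rewrite E2; ring).
    replace (dl * (u0 ^ k0 * u1 ^ k1 * u2 ^ k2) * (h ^ k0 * h ^ k1 * h ^ (k2 + 1 + t))) with
      ((dl * (u0 ^ k0 * u1 ^ k1 * u2 ^ k2)) * (h ^ k0 * h ^ k1 * h ^ (k2 + 1 + t))) by ring.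
    apply Rmult_le_compat_l.
    { repeat apply Rmult_le_pos; try apply Hp; lra. }
    rewrite <- !pow_add. apply pow_anti; auto. unfold K; lia.
Qed.

Lemma Cmod_pterm (d : nat -> nat -> nat -> C) w0 w1 w2 n0 n1 n2 :
  0 <= w0 -> 0 <= w1 -> 0 <= w2 ->
  Cmod (pterm d (RtoC w0) (RtoC w1) (RtoC w2) n0 n1 n2) = Cmod (d n0 n1 n2) * w0 ^ n0 * w1 ^ n1 * w2 ^ n2.
Proof.
  intros. unfold pterm. rewrite !pow_n_RtoC, !Cmod_mult, !Cmod_RtoC'; auto; apply pow_le; auto.
Qed.

Lemma le_eps (x A : R) : 0 <= A -> (forall dl, 0 < dl <= 1 -> x <= A * dl) -> x <= 0.
Proof.
  intros HA H. destruct (Rle_lt_dec x 0) as [|Hx]; auto. exfalso.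
  set (dl := Rmin 1 (x / (2 * (A + 1)))).
  assert (Hd : 0 < dl <= 1).
  { unfold dl. split. apply Rmin_pos; [lra|]. apply Rdiv_lt_0_compat; lra. apply Rmin_l. }
  specialize (H dl Hd).
  assert (dl <= x / (2 * (A + 1))) by apply Rmin_r.
  assert (A * dl <= A * (x / (2 * (A + 1)))) by (apply Rmult_le_compat_l; lra).
  assert (A * (x / (2 * (A + 1))) < x).
  { apply (Rmult_lt_reg_r (2 * (A + 1))); [lra|].
    replace (A * (x / (2 * (A + 1))) * (2 * (A + 1))) with (A * x) by (field; lra). nra. }
  lra.
Qed.

Lemma le_of_lt_eps (x y : R) : (forall e, 0 < e -> x < e + y) -> x <= y.
Proof.
  intros H. destruct (Rle_lt_dec x y) as [|Hl]; auto.
  specialize (H ((x - y) / 2) ltac:(lra)). lra.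
Qed.

Lemma unique_zero (d : nat -> nat -> nat -> C) (M : R) :
  (forall u0 u1 u2, 0 < u0 < 1 -> 0 < u1 < 1 -> 0 < u2 < 1 ->
     filterlim (box_sum d (RtoC u0) (RtoC u1) (RtoC u2)) eventually (locally (RtoC 0))) ->
  (forall n0 n1 n2, Cmod (d n0 n1 n2) * ((/ 2) ^ n0 * (/ 2) ^ n1 * (/ 2) ^ n2) <= M) ->
  forall n0 n1 n2, d n0 n1 n2 = RtoC 0.
Proof.
  intros Hlim HM. apply lex_ind. intros k0 k1 k2 IH.
  set (h := / 2).
  assert (HM0 : 0 <= M).
  { eapply Rle_trans; [|apply (HM 0%nat 0%nat 0%nat)]. apply Rmult_le_pos. apply Cmod_ge_0.
    simpl. lra. }
  assert (Hp : forall x n, 0 <= x -> 0 <= x ^ n) by (intros; apply pow_le; auto).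
  set (H3 := h ^ k0 * h ^ k1 * h ^ k2).
  assert (HH3 : 0 < H3) by (unfold H3, h; repeat apply Rmult_lt_0_compat; apply pow_lt; lra).
  assert (Hmain : Cmod (d k0 k1 k2) * H3 <= 0).
  2:{ apply Cmod_eq_0. pose proof (Cmod_ge_0 (d k0 k1 k2)). nra. }
  apply (le_eps _ (8 * M)); [lra|]. intros dl Hdl.
  set (K := (k0 + k1 + k2 + 1)%nat).
  assert (HhK : 0 < h ^ K <= h).
  { split. apply pow_lt; unfold h; lra. unfold K. replace h with (h ^ 1) at 2 by ring.
    apply pow_anti; unfold h; [lra|lia]. }
  set (u2 := dl * h ^ K).
  set (u1 := dl * u2 ^ k2 * h ^ K).
  set (u0 := dl * u1 ^ k1 * u2 ^ k2 * h ^ K).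
  assert (Hu2 : 0 < u2 <= h) by (unfold u2; split; nra).
  assert (Hu2' : 0 < u2 ^ k2 <= 1) by (split; [apply pow_lt; lra|apply pow_le1; unfold h in *; lra]).
  assert (Hu1 : 0 < u1 <= h).
  { unfold u1. split. repeat apply Rmult_lt_0_compat; lra.
    assert (dl * u2 ^ k2 <= 1) by nra. nra. }
  assert (Hu1' : 0 < u1 ^ k1 <= 1) by (split; [apply pow_lt; lra|apply pow_le1; unfold h in *; lra]).
  assert (Hu0 : 0 < u0 <= h).
  { unfold u0. split. repeat apply Rmult_lt_0_compat; lra.
    assert (dl * u1 ^ k1 * u2 ^ k2 <= 1).
    { assert (dl * u1 ^ k1 <= 1) by nra. nra. }
    nra. }
  set (P := u0 ^ k0 * u1 ^ k1 * u2 ^ k2).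
  assert (HP : 0 < P) by (unfold P; repeat apply Rmult_lt_0_compat; apply pow_lt; lra).
  set (w0 := u0 * h). set (w1 := u1 * h). set (w2 := u2 * h).
  assert (Hw : forall u, 0 < u <= h -> 0 < u * h < 1) by (intros; unfold h in *; split; nra).
  set (f := pterm d (RtoC w0) (RtoC w1) (RtoC w2)).
  assert (Hpt : forall n0 n1 n2, Cmod (if Nat.eqb k0 n0 then if Nat.eqb k1 n1 then if Nat.eqb k2 n2
       then zero else f n0 n1 n2 else f n0 n1 n2 else f n0 n1 n2) <= M * dl * P * (h ^ n0 * h ^ n1 * h ^ n2)).
  { intros n0 n1 n2.
    assert (Hfn : (n0 = k0 /\ n1 = k1 /\ n2 = k2) \/ Cmod (f n0 n1 n2) <= M * dl * P * (h ^ n0 * h ^ n1 * h ^ n2)).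
    { assert (Htri : (n0 < k0 \/ (n0 = k0 /\ n1 < k1) \/ (n0 = k0 /\ n1 = k1 /\ n2 < k2))%nat \/
         (n0 = k0 /\ n1 = k1 /\ n2 = k2) \/
         (k0 < n0 \/ (n0 = k0 /\ k1 < n1) \/ (n0 = k0 /\ n1 = k1 /\ k2 < n2))%nat) by lia.
      destruct Htri as [Hl|[He|Hg]]; [right|left; exact He|right].
      - unfold f, pterm. rewrite (IH n0 n1 n2 Hl). rewrite !Cmult_0_l, Cmod_0.
        apply Rmult_le_pos; [apply Rmult_le_pos; [apply Rmult_le_pos|]|]; try lra.
        apply Rmult_le_pos; [apply Rmult_le_pos|]; apply Hp; unfold h; lra.
      - unfold f. rewrite Cmod_pterm by (unfold w0, w1, w2; nra).
        unfold w0, w1, w2. rewrite !Rpow_mult_distr.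
        pose proof (mono_bound h dl u0 u1 u2 k0 k1 k2 n0 n1 n2 eq_refl Hdl
          ltac:(lra) ltac:(lra) ltac:(lra) eq_refl eq_refl eq_refl Hg) as Hmb.
        fold P in Hmb. pose proof (HM n0 n1 n2) as HMn. fold h in HMn.
        replace (Cmod (d n0 n1 n2) * (u0 ^ n0 * h ^ n0) * (u1 ^ n1 * h ^ n1) * (u2 ^ n2 * h ^ n2)) with
          ((Cmod (d n0 n1 n2) * (h ^ n0 * h ^ n1 * h ^ n2)) * (u0 ^ n0 * u1 ^ n1 * u2 ^ n2)) by ring.
        replace (M * dl * P * (h ^ n0 * h ^ n1 * h ^ n2)) with (M * (dl * P * (h ^ n0 * h ^ n1 * h ^ n2))) by ring.
        apply Rmult_le_compat; auto.
        + apply Rmult_le_pos. apply Cmod_ge_0. apply Rmult_le_pos; [apply Rmult_le_pos|]; apply Hp; unfold h; lra.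
        + apply Rmult_le_pos; [apply Rmult_le_pos|]; apply Hp; lra. }
    destruct (Nat.eqb_spec k0 n0); [|destruct Hfn as [Hfn|Hfn]; [lia|exact Hfn]].
    destruct (Nat.eqb_spec k1 n1); [|destruct Hfn as [Hfn|Hfn]; [lia|exact Hfn]].
    destruct (Nat.eqb_spec k2 n2); [|destruct Hfn as [Hfn|Hfn]; [lia|exact Hfn]].
    rewrite Cmod_zero. apply Rmult_le_pos; [apply Rmult_le_pos; [apply Rmult_le_pos|]|]; try lra.
    apply Rmult_le_pos; [apply Rmult_le_pos|]; apply Hp; unfold h; lra. }
  assert (Hfk : Cmod (f k0 k1 k2) <= 8 * M * dl * P).
  { apply le_of_lt_eps. intros e He.
    pose proof (Hlim w0 w1 w2 (Hw u0 Hu0) (Hw u1 Hu1) (Hw u2 Hu2)) as HL.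
    destruct (proj1 (limC_iff _ _) HL (mkposreal e He)) as [N1 HN1].
    set (N := Nat.max N1 K).
    specialize (HN1 N ltac:(unfold N; lia)). simpl in HN1.
    change (box_sum d (RtoC w0) (RtoC w1) (RtoC w2) N) with (S3 f N) in HN1.
    rewrite (triple_split f N k0 k1 k2) in HN1 by (unfold N, K; lia).
    set (G := fun n0 n1 n2 => if Nat.eqb k0 n0 then if Nat.eqb k1 n1 then if Nat.eqb k2 n2
       then zero else f n0 n1 n2 else f n0 n1 n2 else f n0 n1 n2) in HN1.
    assert (HG : Cmod (S3 G N) <= 8 * M * dl * P).
    { eapply Rle_trans. apply Cmod_S3.
      eapply Rle_trans.
      { apply sum_n_Rle; intros i _. apply sum_n_Rle; intros j _. apply sum_n_Rle; intros k _.
        unfold G. apply Hpt. }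
      rewrite (sum_n_ext _ (fun i => sum_n (fun j => sum_n (fun k => (M * dl * P) * ((/2) ^ i * (/2) ^ j * (/2) ^ k)) N) N)).
      2:{ intros i. apply sum_n_ext. intros j. apply sum_n_ext. intros k. unfold h. toR. ring. }
      rewrite (sum_n_ext _ (fun i => (M * dl * P) * sum_n (fun j => sum_n (fun k => (/2) ^ i * (/2) ^ j * (/2) ^ k) N) N)).
      2:{ intros i. rewrite <- sum_n_Rmult_l. apply sum_n_ext. intros j. apply sum_n_Rmult_l. }
      rewrite sum_n_Rmult_l. pose proof (sum3_half N).
      assert (0 <= M * dl * P) by (apply Rmult_le_pos; [apply Rmult_le_pos|]; lra). nra. }
    replace (f k0 k1 k2) with (Cminus (Cminus (Cplus (f k0 k1 k2) (S3 G N)) (RtoC 0)) (S3 G N))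
      by (destruct (f k0 k1 k2), (S3 G N); unfold Cminus, Cplus, Copp, RtoC; simpl; f_equal; ring).
    assert (HN1' : Cmod (Cminus (Cplus (f k0 k1 k2) (S3 G N)) (RtoC 0)) < e) by exact HN1.
    eapply Rle_lt_trans. unfold Cminus at 1. apply Cmod_triangle. rewrite Cmod_opp. lra. }
  unfold f in Hfk. rewrite Cmod_pterm in Hfk by (unfold w0, w1, w2; nra).
  unfold w0, w1, w2 in Hfk. rewrite !Rpow_mult_distr in Hfk.
  replace (Cmod (d k0 k1 k2) * (u0 ^ k0 * h ^ k0) * (u1 ^ k1 * h ^ k1) * (u2 ^ k2 * h ^ k2)) with
    ((Cmod (d k0 k1 k2) * H3) * P) in Hfk by (unfold H3, P; ring).
  replace (8 * M * dl * P) with ((8 * M * dl) * P) in Hfk by ring.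
  apply Rmult_le_reg_r in Hfk; auto.
Qed.

Lemma cexp_real z r : Re z = r -> Im z = 0 -> cexp z = RtoC (exp r).
Proof.
  intros H1 H2. unfold cexp. rewrite H1, H2, cos_0, sin_0. unfold RtoC. f_equal; ring.
Qed.

Lemma point_in_D w0 w1 w2 : 0 < w0 < 1 -> 0 < w1 < 1 -> 0 < w2 < 1 ->
  exists z0 z1 z2, in_H2 z0 z1 z2 /\ q0 z0 z1 z2 = RtoC w0 /\ q1 z0 z1 z2 = RtoC w1 /\ q2 z0 z1 z2 = RtoC w2.
Proof.
  intros H0 H1 H2. pose proof PI_RGT_0.
  set (L0 := - (4 / PI) * ln w0). set (L1 := - (4 / PI) * ln w1). set (L2 := - (4 / PI) * ln w2).
  assert (HL : forall w, 0 < w < 1 -> 0 < - (4 / PI) * ln w).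
  { intros w Hw. assert (ln w < 0) by (rewrite <- ln_1; apply ln_increasing; lra).
    assert (0 < 4 / PI) by (apply Rdiv_lt_0_compat; lra). nra. }
  pose proof (HL w0 H0). pose proof (HL w1 H1). pose proof (HL w2 H2). fold L0 L1 L2 in H3, H4, H5.
  exists (0, L0 + L1), (0, - L1), (0, L2 + L1). split; [|split; [|split]].
  - unfold in_H2; simpl. split; nra.
  - unfold q0. rewrite (cexp_real _ (ln w0)); [rewrite exp_ln; [reflexivity|lra]| |].
    + unfold Cmult, Cplus, RtoC, Ci; simpl. unfold L0, L1. field. lra.
    + unfold Cmult, Cplus, RtoC, Ci; simpl. ring.
  - unfold q1. rewrite (cexp_real _ (ln w1)); [rewrite exp_ln; [reflexivity|lra]| |].
    + unfold Cmult, Cplus, RtoC, Ci; simpl. unfold L1. field. lra.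
    + unfold Cmult, Cplus, RtoC, Ci; simpl. ring.
  - unfold q2. rewrite (cexp_real _ (ln w2)); [rewrite exp_ln; [reflexivity|lra]| |].
    + unfold Cmult, Cplus, RtoC, Ci; simpl. unfold L2, L1. field. lra.
    + unfold Cmult, Cplus, RtoC, Ci; simpl. ring.
Qed.

Lemma C_aux (A B a b : C) : Cplus (Cminus A B) (Cminus a b) = Cminus (Cplus A a) (Cplus B b).
Proof. destruct A, B, a, b. unfold Cminus, Cplus, Copp. simpl. f_equal; ring. Qed.

Lemma sum_n_Cminus (f g : nat -> C) n :
  sum_n (fun k => Cminus (f k) (g k)) n = Cminus (sum_n f n) (sum_n g n).
Proof.
  induction n.
  - rewrite !sum_O. reflexivity.
  - rewrite !sum_Sn, IHn. apply C_aux.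
Qed.

Lemma box_sum_minus (c c' : nat -> nat -> nat -> C) w0 w1 w2 N :
  box_sum (fun n0 n1 n2 => Cminus (c' n0 n1 n2) (c n0 n1 n2)) w0 w1 w2 N =
  Cminus (box_sum c' w0 w1 w2 N) (box_sum c w0 w1 w2 N).
Proof.
  unfold box_sum. rewrite <- sum_n_Cminus. apply sum_n_ext. intros i.
  rewrite <- sum_n_Cminus. apply sum_n_ext. intros j.
  rewrite <- sum_n_Cminus. apply sum_n_ext. intros k.
  unfold pterm. destruct (c' i j k), (c i j k), (pow_n w0 i), (pow_n w1 j), (pow_n w2 k).
  unfold Cminus, Cmult, Cplus, Copp. simpl. f_equal; ring.
Qed.

Lemma coef_bound (c : nat -> nat -> nat -> C) M :
  (forall N, box_abs_sum c (RtoC (/2)) (RtoC (/2)) (RtoC (/2)) N <= M) ->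
  forall n0 n1 n2, Cmod (c n0 n1 n2) * ((/ 2) ^ n0 * (/ 2) ^ n1 * (/ 2) ^ n2) <= M.
Proof.
  intros H n0 n1 n2. set (N := (n0 + n1 + n2)%nat).
  eapply Rle_trans; [|apply (H N)]. unfold box_abs_sum.
  assert (Hnn : forall i j k, 0 <= Cmod (pterm c (RtoC (/ 2)) (RtoC (/ 2)) (RtoC (/ 2)) i j k)) by (intros; apply Cmod_ge_0).
  eapply Rle_trans; [|apply (sum_n_ge_term _ N n0)].
  2: unfold N; lia.
  2:{ intros; apply sum_n_nonneg; intros; apply sum_n_nonneg; auto. }
  eapply Rle_trans; [|apply (sum_n_ge_term _ N n1)].
  2: unfold N; lia.
  2:{ intros; apply sum_n_nonneg; auto. }
  eapply Rle_trans; [|apply (sum_n_ge_term _ N n2)].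
  2: unfold N; lia.
  2: auto.
  cbv beta. rewrite Cmod_pterm by lra. right; ring.
Qed.

Ltac evalb := repeat match goal with |- context [Nat.eqb ?a ?b] =>
  let v := eval vm_compute in (Nat.eqb a b) in change (Nat.eqb a b) with v end; cbv beta iota.
Ltac evaliZ := repeat match goal with |- context [iZ ?a] =>
  let v := eval vm_compute in (iZ a) in change (iZ a) with v end.
Ltac expand := repeat (first [rewrite sum_Sn | rewrite sum_O]).

Lemma coefg_val a1 a2 b1 b2 g1 g2 :
  coefg a1 a2 b1 b2 g1 g2 = (cos (PI * (INR b1 * xr a1 g1 + INR b2 * xr a2 g2)), sin (PI * (INR b1 * xr a1 g1 + INR b2 * xr a2 g2))).
Proof.
  unfold coefg, theta_term. rewrite (cexp_ext _ (0, PI * (INR b1 * xr a1 g1 + INR b2 * xr a2 g2))).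
  - unfold cexp. simpl. rewrite exp_0, !Rmult_1_l. reflexivity.
  - unfold xr, Cmult, Cplus, RtoC, Ci; simpl. ring.
  - unfold xr, Cmult, Cplus, RtoC, Ci; simpl. ring.
Qed.

Ltac fixcos H := repeat match type of H with context [cos (PI * ?e)] =>
  first [ replace (cos (PI * e)) with 1 in H by (replace e with 0 by (unfold xr; simpl; lra); rewrite Rmult_0_r; symmetry; apply cos_0)
        | replace (cos (PI * e)) with (-1) in H by (replace e with 1 by (unfold xr; simpl; lra); rewrite Rmult_1_r; symmetry; apply cos_PI)
        | replace (cos (PI * e)) with (-1) in H by (replace e with (-1) by (unfold xr; simpl; lra);
             replace (PI * -1) with (- PI) by ring; rewrite cos_neg; symmetry; apply cos_PI) ] end.

Ltac evalsum := match goal with |- context [Sq ?f ?n] =>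
  let v := eval vm_compute in n in change (Sq f n) with (Sq f v) end.

Lemma cc_nonzero a1 a2 b1 b2 : (a1 <= 1)%nat -> (a2 <= 1)%nat -> (b1 <= 1)%nat -> (b2 <= 1)%nat ->
  Nat.even (a1 * b1 + a2 * b2) = true ->
  cc a1 a2 b1 b2 a1 (a1 + a2 - 2 * a1 * a2) a2 <> RtoC 0.
Proof.
  intros Ha1 Ha2 Hb1 Hb2 He.
  assert (Ea1 : a1 = 0%nat \/ a1 = 1%nat) by lia. assert (Ea2 : a2 = 0%nat \/ a2 = 1%nat) by lia.
  assert (Eb1 : b1 = 0%nat \/ b1 = 1%nat) by lia. assert (Eb2 : b2 = 0%nat \/ b2 = 1%nat) by lia.
  destruct Ea1, Ea2, Eb1, Eb2; subst; simpl in He; try discriminate;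
  unfold cc; evalsum; unfold Sq; expand; unfold Fc; evalb; evaliZ; rewrite ?coefg_val;
  intros H; apply (f_equal fst) in H; simpl in H; fixcos H; lra.
Qed.

Lemma cc_support a1 a2 b1 b2 n0 n1 n2 : cc a1 a2 b1 b2 n0 n1 n2 <> RtoC 0 ->
  exists i j, Ez0 a1 i = n0 /\ Ez1 a1 a2 i j = n1 /\ Ez2 a2 j = n2.
Proof.
  intros H. apply NNPP. intros Hn. apply H.
  unfold cc, Sq. change (RtoC 0) with (@zero C_AbelianMonoid). apply sum_n_zero. intros i _. apply sum_n_zero. intros j _.
  unfold Fc. destruct (Nat.eqb_spec (Ez0 a1 i) n0); [|reflexivity].
  destruct (Nat.eqb_spec (Ez1 a1 a2 i j) n1); [|reflexivity].
  destruct (Nat.eqb_spec (Ez2 a2 j) n2); [|reflexivity].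
  exfalso. apply Hn. exists i, j. auto.
Qed.

Lemma ee_pos (x : Z) : x <> 0%Z -> (1 <= ee x)%nat.
Proof. intros H. unfold ee. assert (1 <= x * x)%Z by nia. lia. Qed.

Lemma Ez_lower a1 a2 i j : (a1 <= 1)%nat -> (a2 <= 1)%nat ->
  (a1 <= Ez0 a1 i)%nat /\ (a2 <= Ez2 a2 j)%nat /\ (a1 + a2 - 2 * a1 * a2 <= Ez1 a1 a2 i j)%nat.
Proof.
  intros Ha1 Ha2. unfold Ez0, Ez1, Ez2, uZ.
  assert (Ea1 : a1 = 0%nat \/ a1 = 1%nat) by lia. assert (Ea2 : a2 = 0%nat \/ a2 = 1%nat) by lia.
  destruct Ea1, Ea2; subst; repeat split; try lia; apply ee_pos; lia.
Qed.

Lemma expansion_unique a1 a2 b1 b2 c : (a1 <= 1)%nat -> (a2 <= 1)%nat ->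
  theta_expansion a1 a2 b1 b2 c -> forall n0 n1 n2, c n0 n1 n2 = cc a1 a2 b1 b2 n0 n1 n2.
Proof.
  intros Ha1 Ha2 Hc.
  pose proof (expansion_exists a1 a2 b1 b2 Ha1 Ha2) as Hcc.
  set (d := fun n0 n1 n2 => Cminus (c n0 n1 n2) (cc a1 a2 b1 b2 n0 n1 n2)).
  destruct (point_in_D (/2) (/2) (/2)) as [z0 [z1 [z2 [Hz [E0 [E1 E2]]]]]]; try lra.
  destruct (Hc z0 z1 z2 Hz) as [v1 [_ [[M1 HM1] _]]].
  destruct (Hcc z0 z1 z2 Hz) as [v2 [_ [[M2 HM2] _]]].
  rewrite E0, E1, E2 in HM1, HM2.
  assert (Hd : forall n0 n1 n2, d n0 n1 n2 = RtoC 0).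
  { apply (unique_zero d (M1 + M2)).
    - intros u0 u1 u2 H0 H1 H2.
      destruct (point_in_D u0 u1 u2 H0 H1 H2) as [y0 [y1 [y2 [Hy [F0 [F1 F2]]]]]].
      destruct (Hc y0 y1 y2 Hy) as [v [Hth [_ Hl]]].
      destruct (Hcc y0 y1 y2 Hy) as [v' [Hth' [_ Hl']]].
      assert (Hvv : v = v').
      { apply (@filterlim_locally_unique nat C_AbsRing C_NormedModule eventually _ _ v v' Hth Hth'). }
      subst v'. rewrite F0, F1, F2 in Hl, Hl'.
      apply limC_iff. intros e.
      destruct (proj1 (limC_iff _ _) Hl (pos_div_2 e)) as [N1 HN1].
      destruct (proj1 (limC_iff _ _) Hl' (pos_div_2 e)) as [N2 HN2].
      exists (Nat.max N1 N2). intros N HN.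
      unfold d. rewrite box_sum_minus.
      specialize (HN1 N ltac:(lia)). specialize (HN2 N ltac:(lia)). simpl in HN1, HN2.
      replace (Cminus (Cminus (box_sum c (RtoC u0) (RtoC u1) (RtoC u2) N)
          (box_sum (cc a1 a2 b1 b2) (RtoC u0) (RtoC u1) (RtoC u2) N)) (RtoC 0))
        with (Cplus (Cminus (box_sum c (RtoC u0) (RtoC u1) (RtoC u2) N) v)
                    (Copp (Cminus (box_sum (cc a1 a2 b1 b2) (RtoC u0) (RtoC u1) (RtoC u2) N) v))).
      + eapply Rle_lt_trans. apply Cmod_triangle. rewrite Cmod_opp. destruct e; simpl in *. lra.
      + destruct (box_sum c (RtoC u0) (RtoC u1) (RtoC u2) N), (box_sum (cc a1 a2 b1 b2) (RtoC u0) (RtoC u1) (RtoC u2) N), v.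
        unfold Cminus, Cplus, Copp, RtoC. simpl. f_equal; ring.
    - intros n0 n1 n2. unfold d.
      pose proof (coef_bound c M1 HM1 n0 n1 n2).
      pose proof (coef_bound _ M2 HM2 n0 n1 n2).
      assert (Cmod (Cminus (c n0 n1 n2) (cc a1 a2 b1 b2 n0 n1 n2)) <= Cmod (c n0 n1 n2) + Cmod (cc a1 a2 b1 b2 n0 n1 n2)).
      { unfold Cminus. eapply Rle_trans. apply Cmod_triangle. rewrite Cmod_opp. lra. }
      assert (0 < (/ 2) ^ n0 * (/ 2) ^ n1 * (/ 2) ^ n2) by (repeat apply Rmult_lt_0_compat; apply pow_lt; lra).
      nra. }
  intros n0 n1 n2. specialize (Hd n0 n1 n2). unfold d in Hd.
  destruct (c n0 n1 n2), (cc a1 a2 b1 b2 n0 n1 n2). unfold Cminus, Cplus, Copp, RtoC in Hd. simpl in Hd.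
  injection Hd as Ha Hb. f_equal; lra.
Qed.

Close Scope R_scope.

Theorem lemma2p3 (a1 a2 b1 b2 : nat)
  (Ha1 : (a1 <= 1)%nat) (Ha2 : (a2 <= 1)%nat)
  (Hb1 : (b1 <= 1)%nat) (Hb2 : (b2 <= 1)%nat)
  (Heven : Nat.even (a1 * b1 + a2 * b2) = true) :
  (exists c, theta_expansion a1 a2 b1 b2 c) /\
  (forall c, theta_expansion a1 a2 b1 b2 c ->
     mult_q0 c a1 /\ mult_q2 c a2 /\ mult_q1 c (a1 + a2 - 2 * a1 * a2)%nat).
Proof.
  split.
  - exists (cc a1 a2 b1 b2). apply expansion_exists; auto.
  - intros c Hc.
    assert (Hceq : c = cc a1 a2 b1 b2).
    { apply functional_extensionality; intros n0. apply functional_extensionality; intros n1.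
      apply functional_extensionality; intros n2. apply expansion_unique; auto. }
    subst c.
    pose proof (cc_nonzero a1 a2 b1 b2 Ha1 Ha2 Hb1 Hb2 Heven) as Hnz.
    split; [|split].
    + split. { exists (a1 + a2 - 2 * a1 * a2)%nat, a2. exact Hnz. }
      intros n0 n1 n2 H. destruct (cc_support _ _ _ _ _ _ _ H) as [i [j [<- [<- <-]]]].
      apply (Ez_lower a1 a2 i j Ha1 Ha2).
    + split. { exists a1, (a1 + a2 - 2 * a1 * a2)%nat. exact Hnz. }
      intros n0 n1 n2 H. destruct (cc_support _ _ _ _ _ _ _ H) as [i [j [<- [<- <-]]]].
      apply (Ez_lower a1 a2 i j Ha1 Ha2).
    + split. { exists a1, a2. exact Hnz. }
      intros n0 n1 n2 H. destruct (cc_support _ _ _ _ _ _ _ H) as [i [j [<- [<- <-]]]].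
      apply (Ez_lower a1 a2 i j Ha1 Ha2).
Qed.
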